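(* Let $\alpha\in(0,1)$ be irrational, and let $A_n,B_n,C_n$ be as defined in the context, so that $P_{q_n}(\alpha)=A_nB_nC_n$. Let $(\tau_n)_{n\in\mathbb N}$ and $(\kappa_n)_{n\in\mathbb N}$ be eventually increasing sequences of natural numbers with $\tau_n,\kappa_n=O(q_n^{1/2})$. Then for all sufficiently large $n$, $$A_n=2\pi c_n\big(1+O(\Lambda_n^2)\big),$$ $$\log(B_n)=-2\pi^2\frac{c_n}{q_n^2}\sum_{t=1}^{M_n-1}\frac{D_t(\alpha_n^-)}{\sin(\pi t/q_n)\sin(\pi(t+1)/q_n)}-2\sum_{t=1}^{\tau_n}\sum_{j=2}^{\tau_n}\frac1j\Big(\frac{c_n\xi_{nt}}{t}\Big)^j+O(\tau_n^{-1}),$$ $$C_n=\prod_{t=1}^{\kappa_n}\Big(1-\frac1{4(t/c_n-\xi_{nt})^2}\Big)+O(\kappa_n^{-1}).$$ Here $M_n=\lfloor(q_n-1)/2\rfloor$, and $\xi_{nt}=\{tq_{n-1}/q_n\}-\frac12$ for $t\in\{0,\ldots,q_n-1\}$.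
   Context: Continued fraction and convergent notation: - $\alpha=[0;a_1,a_2,\ldots]$. - $q_0=0$, $q_1=1$, $q_{n+1}=a_nq_n+q_{n-1}$, and $p_0=1$, $p_1=0$, $p_{n+1}=a_np_n+p_{n-1}$. - $\Lambda_n=q_n\alpha-p_n$. - $\alpha_n^+=[a_n;a_{n+1},\ldots]$ and $\alpha_n^-=[0;a_{n-1},\ldots,a_1]=q_{n-1}/q_n$. - $c_n=1/(\alpha_n^++\alpha_n^-)$. - $D_t(\beta)=\sum_{s=1}^t(\{\beta s\}-\frac12)$. The three factors: - $P_N(\alpha)=\prod_{r=1}^N|2\sin(\pi r\alpha)|$. - $s_{nt}=2\sin\big(\pi[t/q_n-|\Lambda_n|(\{tq_{n-1}/q_n\}-\frac12)]\big)$. - $A_n=|2q_n\sin(\pi\Lambda_n)|$. - $B_n=\big|\prod_{t=1}^{q_n-1}\frac{s_{nt}}{2\sin(\pi t/q_n)}\big|$. - $C_n=\prod_{t=1}^{q_n-1}\big(1-s_{n0}^2/s_{nt}^2\big)^{1/2}$. The $O$-terms have constants independent of $n$. *)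

(* Defs.v *)
From Stdlib Require Import Reals Lra Lia List ZArith.
Import ListNotations.
Open Scope R_scope.

(* Finite sum / product over the integer range a..b (empty if b < a). *)
Definition sumR (a b : nat) (f : nat -> R) : R :=
  fold_right Rplus 0 (map f (seq a (S b - a))).
Definition prodR (a b : nat) (f : nat -> R) : R :=
  fold_right Rmult 1 (map f (seq a (S b - a))).

Definition frac (x : R) : R := frac_part x.

Fixpoint gauss_x (al : R) (k : nat) : R :=
  match k with
  | O => al
  | S k' => frac (/ gauss_x al k')
  end.

(* Partial quotients: al = [0; a_1, a_2, ...], a_n = floor (1 / x_(n-1)) (n >= 1). *)
Definition cf_a (al : R) (n : nat) : nat := Z.to_nat (Int_part (/ gauss_x al (pred n))).

Fixpoint conv_pair (al : R) (u0 u1 : nat) (n : nat) : nat * nat :=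
  match n with
  | O => (u0, u1)
  | S k => let (x, y) := conv_pair al u0 u1 k in (y, cf_a al (S k) * y + x)%nat
  end.

(* q_0 = 0, q_1 = 1, p_0 = 1, p_1 = 0. *)
Definition cf_q (al : R) (n : nat) : nat := fst (conv_pair al 0 1 n).
Definition cf_p (al : R) (n : nat) : nat := fst (conv_pair al 1 0 n).

Definition Lambda (al : R) (n : nat) : R := INR (cf_q al n) * al - INR (cf_p al n).

(* alpha_n^+ = [a_n; a_(n+1), ...] = 1 / x_(n-1);  alpha_n^- = q_(n-1)/q_n *)
Definition alpha_plus (al : R) (n : nat) : R := / gauss_x al (pred n).
Definition alpha_minus (al : R) (n : nat) : R := INR (cf_q al (pred n)) / INR (cf_q al n).

Definition c_n (al : R) (n : nat) : R := / (alpha_plus al n + alpha_minus al n).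

Definition Dt (t : nat) (beta : R) : R := sumR 1 t (fun s => frac (beta * INR s) - / 2).

Definition xi (al : R) (n t : nat) : R :=
  frac (INR t * INR (cf_q al (pred n)) / INR (cf_q al n)) - / 2.

Definition s_nt (al : R) (n t : nat) : R :=
  2 * sin (PI * (INR t / INR (cf_q al n) - Rabs (Lambda al n) * xi al n t)).

Definition A_n (al : R) (n : nat) : R := Rabs (2 * INR (cf_q al n) * sin (PI * Lambda al n)).

Definition B_n (al : R) (n : nat) : R :=
  Rabs (prodR 1 (cf_q al n - 1) (fun t => s_nt al n t / (2 * sin (PI * INR t / INR (cf_q al n))))).

Definition C_n (al : R) (n : nat) : R :=
  prodR 1 (cf_q al n - 1) (fun t => sqrt (1 - (s_nt al n 0) ^ 2 / (s_nt al n t) ^ 2)).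

Definition P_N (N : nat) (al : R) : R := prodR 1 N (fun r => Rabs (2 * sin (PI * INR r * al))).

Definition M_n (al : R) (n : nat) : nat := ((cf_q al n - 1) / 2)%nat.

Definition logB_main (al : R) (tau : nat -> nat) (n : nat) : R :=
  - 2 * PI ^ 2 * c_n al n / INR (cf_q al n) ^ 2 *
    sumR 1 (M_n al n - 1) (fun t =>
      Dt t (alpha_minus al n) /
      (sin (PI * INR t / INR (cf_q al n)) * sin (PI * INR (S t) / INR (cf_q al n))))
  - 2 * sumR 1 (tau n) (fun t => sumR 2 (tau n) (fun j =>
      / INR j * (c_n al n * xi al n t / INR t) ^ j)).

Definition C_main (al : R) (kappa : nat -> nat) (n : nat) : R :=
  prodR 1 (kappa n) (fun t => 1 - / (4 * (INR t / c_n al n - xi al n t) ^ 2)).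

Definition eventually_increasing (u : nat -> nat) : Prop :=
  exists N, forall n, (N <= n)%nat -> (u n < u (S n))%nat.

Definition bigO_sqrt_q (al : R) (u : nat -> nat) : Prop :=
  exists K N, forall n, (N <= n)%nat -> INR (u n) <= K * sqrt (INR (cf_q al n)).

(* Main.v *)
Require Import Defs.
From Stdlib Require Import Reals ZArith.
From Stdlib Require Import Lra Lia Psatz List Arith.
Open Scope R_scope.

Definition SL (a n : nat) (f : nat -> R) : R := fold_right Rplus 0 (map f (seq a n)).
Definition PL (a n : nat) (f : nat -> R) : R := fold_right Rmult 1 (map f (seq a n)).

Lemma sumR_SL a b f : sumR a b f = SL a (S b - a) f.
Proof. reflexivity. Qed.
Lemma prodR_PL a b f : prodR a b f = PL a (S b - a) f.
Proof. reflexivity. Qed.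

Lemma SL_0 a f : SL a 0 f = 0. Proof. reflexivity. Qed.
Lemma PL_0 a f : PL a 0 f = 1. Proof. reflexivity. Qed.
Lemma SL_cons a n f : SL a (S n) f = f a + SL (S a) n f. Proof. reflexivity. Qed.
Lemma PL_cons a n f : PL a (S n) f = f a * PL (S a) n f. Proof. reflexivity. Qed.

Lemma SL_add a n m f : SL a (n + m) f = SL a n f + SL (a + n) m f.
Proof.
  unfold SL. rewrite seq_app, map_app, fold_right_app.
  generalize (fold_right Rplus 0 (map f (seq (a + n) m))) as z.
  induction (seq a n) as [|x l IH]; intro z; simpl; [lra|]. rewrite IH. lra.
Qed.
Lemma PL_add a n m f : PL a (n + m) f = PL a n f * PL (a + n) m f.
Proof.
  unfold PL. rewrite seq_app, map_app, fold_right_app.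
  generalize (fold_right Rmult 1 (map f (seq (a + n) m))) as z.
  induction (seq a n) as [|x l IH]; intro z; simpl; [lra|]. rewrite IH. ring.
Qed.
Lemma SL_S a n f : SL a (S n) f = SL a n f + f (a + n)%nat.
Proof. replace (S n) with (n + 1)%nat by lia. rewrite SL_add. unfold SL at 2. simpl. ring. Qed.
Lemma PL_S a n f : PL a (S n) f = PL a n f * f (a + n)%nat.
Proof. replace (S n) with (n + 1)%nat by lia. rewrite PL_add. unfold PL at 2. simpl. ring. Qed.

Lemma SL_ext a n f g : (forall i, (a <= i < a + n)%nat -> f i = g i) -> SL a n f = SL a n g.
Proof.
  revert a. induction n; intros a H; [reflexivity|]. rewrite !SL_cons.
  rewrite H by lia. rewrite IHn; [reflexivity|]. intros; apply H; lia.
Qed.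
Lemma PL_ext a n f g : (forall i, (a <= i < a + n)%nat -> f i = g i) -> PL a n f = PL a n g.
Proof.
  revert a. induction n; intros a H; [reflexivity|]. rewrite !PL_cons.
  rewrite H by lia. rewrite IHn; [reflexivity|]. intros; apply H; lia.
Qed.

Lemma SL_plus a n f g : SL a n (fun i => f i + g i) = SL a n f + SL a n g.
Proof. revert a; induction n; intro a; [simpl; unfold SL; simpl; lra|]. rewrite !SL_cons, IHn. ring. Qed.
Lemma SL_scal a n k f : SL a n (fun i => k * f i) = k * SL a n f.
Proof. revert a; induction n; intro a; [unfold SL; simpl; lra|]. rewrite !SL_cons, IHn. ring. Qed.
Lemma SL_minus a n f g : SL a n (fun i => f i - g i) = SL a n f - SL a n g.
Proof. revert a; induction n; intro a; [unfold SL; simpl; lra|]. rewrite !SL_cons, IHn. ring. Qed.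
Lemma PL_mult a n f g : PL a n (fun i => f i * g i) = PL a n f * PL a n g.
Proof. revert a; induction n; intro a; [unfold PL; simpl; lra|]. rewrite !PL_cons, IHn. ring. Qed.

Lemma SL_le a n f g : (forall i, (a <= i < a + n)%nat -> f i <= g i) -> SL a n f <= SL a n g.
Proof.
  revert a. induction n; intros a H; [unfold SL; simpl; lra|]. rewrite !SL_cons.
  assert (f a <= g a) by (apply H; lia).
  assert (SL (S a) n f <= SL (S a) n g) by (apply IHn; intros; apply H; lia). lra.
Qed.
Lemma SL_abs a n f : Rabs (SL a n f) <= SL a n (fun i => Rabs (f i)).
Proof.
  revert a. induction n; intro a; [unfold SL; simpl; rewrite Rabs_R0; lra|]. rewrite !SL_cons.
  eapply Rle_trans; [apply Rabs_triang|]. specialize (IHn (S a)). lra.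
Qed.
Lemma SL_const a n k : SL a n (fun _ => k) = INR n * k.
Proof. revert a; induction n; intro a; [unfold SL; simpl; lra|]. rewrite SL_cons, IHn, S_INR. ring. Qed.
Lemma SL_bound a n f B : (forall i, (a <= i < a + n)%nat -> Rabs (f i) <= B) -> Rabs (SL a n f) <= INR n * B.
Proof.
  intro H. eapply Rle_trans; [apply SL_abs|]. rewrite <- SL_const with (a := a).
  apply SL_le. intros; apply H; auto.
Qed.

Lemma SL_refl a n c F : (a + n <= c + 1)%nat ->
  SL a n (fun i => F (c - i)%nat) = SL (c + 1 - a - n) n F.
Proof.
  revert a. induction n; intros a H; [reflexivity|].
  rewrite SL_cons, IHn by lia.
  replace (c + 1 - a - S n)%nat with (c - a - n)%nat by lia.
  replace (c + 1 - S a - n)%nat with (c - a - n)%nat by lia.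
  rewrite SL_S. replace (c - a - n + n)%nat with (c - a)%nat by lia. ring.
Qed.
Lemma PL_refl a n c F : (a + n <= c + 1)%nat ->
  PL a n (fun i => F (c - i)%nat) = PL (c + 1 - a - n) n F.
Proof.
  revert a. induction n; intros a H; [reflexivity|].
  rewrite PL_cons, IHn by lia.
  replace (c + 1 - a - S n)%nat with (c - a - n)%nat by lia.
  replace (c + 1 - S a - n)%nat with (c - a - n)%nat by lia.
  rewrite PL_S. replace (c - a - n + n)%nat with (c - a)%nat by lia. ring.
Qed.

Lemma SL_tele a n h : SL a n (fun i => h (S i) - h i) = h (a + n)%nat - h a.
Proof.
  induction n; [rewrite Nat.add_0_r; unfold SL; simpl; ring|].
  rewrite SL_S, IHn. replace (a + S n)%nat with (S (a + n)) by lia. ring.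
Qed.

Lemma SL_sym q k g : (2 * k + 1 <= q)%nat ->
  (forall t, (1 <= t <= q - 1)%nat -> g (q - t)%nat = g t) ->
  SL 1 (q - 1) g = 2 * SL 1 k g + SL (k + 1) (q - 1 - 2 * k) g.
Proof.
  intros Hk Hs.
  replace (q - 1)%nat with (k + (q - 1 - 2 * k) + k)%nat at 1 by lia.
  rewrite !SL_add.
  replace (1 + (k + (q - 1 - 2 * k)))%nat with (q - k)%nat by lia.
  replace (1 + k)%nat with (k + 1)%nat by lia.
  assert (SL (q - k) k g = SL 1 k g).
  { rewrite (SL_ext _ _ g (fun i => g (q - i)%nat)).
    - rewrite SL_refl by lia. f_equal; lia.
    - intros i Hi. symmetry. apply Hs. lia. }
  lra.
Qed.
Lemma PL_sym q k g : (2 * k + 1 <= q)%nat ->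
  (forall t, (1 <= t <= q - 1)%nat -> g (q - t)%nat = g t) ->
  PL 1 (q - 1) g = PL 1 k g * PL 1 k g * PL (k + 1) (q - 1 - 2 * k) g.
Proof.
  intros Hk Hs.
  replace (q - 1)%nat with (k + (q - 1 - 2 * k) + k)%nat at 1 by lia.
  rewrite !PL_add.
  replace (1 + (k + (q - 1 - 2 * k)))%nat with (q - k)%nat by lia.
  replace (1 + k)%nat with (k + 1)%nat by lia.
  assert (PL (q - k) k g = PL 1 k g).
  { rewrite (PL_ext _ _ g (fun i => g (q - i)%nat)).
    - rewrite PL_refl by lia. f_equal; lia.
    - intros i Hi. symmetry. apply Hs. lia. }
  rewrite H. ring.
Qed.

Lemma PL_pos a n f : (forall i, (a <= i < a + n)%nat -> 0 < f i) -> 0 < PL a n f.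
Proof.
  revert a. induction n; intros a H; [unfold PL; simpl; lra|]. rewrite PL_cons.
  apply Rmult_lt_0_compat; [apply H; lia|apply IHn; intros; apply H; lia].
Qed.
Lemma PL_01 a n f : (forall i, (a <= i < a + n)%nat -> 0 <= f i <= 1) -> 0 <= PL a n f <= 1.
Proof.
  revert a. induction n; intros a H; [unfold PL; simpl; lra|]. rewrite PL_cons.
  assert (0 <= f a <= 1) by (apply H; lia).
  assert (0 <= PL (S a) n f <= 1) by (apply IHn; intros; apply H; lia). nra.
Qed.
Lemma ln_PL a n f : (forall i, (a <= i < a + n)%nat -> 0 < f i) -> ln (PL a n f) = SL a n (fun i => ln (f i)).
Proof.
  revert a. induction n; intros a H; [unfold PL, SL; simpl; apply ln_1|]. rewrite PL_cons, SL_cons.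
  rewrite ln_mult; [| apply H; lia | apply PL_pos; intros; apply H; lia].
  rewrite IHn; [reflexivity|]. intros; apply H; lia.
Qed.
Lemma PL_diff a n f g : (forall i, (a <= i < a + n)%nat -> 0 <= f i <= 1 /\ 0 <= g i <= 1) ->
  Rabs (PL a n f - PL a n g) <= SL a n (fun i => Rabs (f i - g i)).
Proof.
  revert a. induction n; intros a H; [unfold PL, SL; simpl; rewrite Rminus_diag, Rabs_R0; lra|].
  rewrite !PL_cons, SL_cons.
  assert (H0 : 0 <= f a <= 1 /\ 0 <= g a <= 1) by (apply H; lia).
  assert (H1 : Rabs (PL (S a) n f - PL (S a) n g) <= SL (S a) n (fun i => Rabs (f i - g i)))
    by (apply IHn; intros; apply H; lia).
  assert (H2 : 0 <= PL (S a) n g <= 1) by (apply PL_01; intros; apply H; lia).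
  replace (f a * PL (S a) n f - g a * PL (S a) n g) with
    (f a * (PL (S a) n f - PL (S a) n g) + (f a - g a) * PL (S a) n g) by ring.
  eapply Rle_trans; [apply Rabs_triang|]. rewrite !Rabs_mult.
  assert (Rabs (f a) <= 1) by (rewrite Rabs_pos_eq; lra).
  assert (Rabs (PL (S a) n g) <= 1) by (rewrite Rabs_pos_eq; lra).
  assert (0 <= Rabs (f a - g a)) by apply Rabs_pos.
  assert (0 <= Rabs (PL (S a) n f - PL (S a) n g)) by apply Rabs_pos.
  nra.
Qed.

Lemma abel m (xi C : nat -> R) :
  let D := fun t => SL 1 t xi in
  SL 1 (S m) (fun t => xi t * C t) = D (S m) * C (S m) + SL 1 m (fun t => D t * (C t - C (S t))).
Proof.
  intro D. induction m.
  - unfold D, SL; simpl. ring.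
  - rewrite SL_S, IHm, SL_S. unfold D. rewrite (SL_S 1 (S m) xi).
    replace (1 + S m)%nat with (S (S m)) by lia. replace (1 + m)%nat with (S m) by lia. ring.
Qed.

(* telescoping bound sum 1/t^2 *)
Lemma SL_inv_sq a n : (2 <= a)%nat -> SL a n (fun t => / (INR t ^ 2)) <= / INR (a - 1).
Proof.
  intro Ha.
  assert (E: SL a n (fun t => / (INR t ^ 2)) <= SL a n (fun t => (fun s => - / INR (s - 1)) (S t) - (fun s => - / INR (s - 1)) t)).
  { apply SL_le. intros i Hi. cbv beta. replace (S i - 1)%nat with i by lia.
    assert (1 <= INR (i - 1)) by (apply (le_INR 1); lia).
    rewrite minus_INR in * by lia. change (INR 1) with 1 in *.
    assert (0 < INR i - 1) by lra.
    apply Rle_trans with (/ (INR i - 1) - / INR i); [|lra].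
    replace (/ (INR i - 1) - / INR i) with (/ ((INR i - 1) * INR i)) by (field; lra).
    apply Rinv_le_contravar; nra. }
  rewrite SL_tele in E. cbv beta in E.
  assert (0 < INR (a + n - 1)) by (apply lt_0_INR; lia).
  assert (0 < / INR (a + n - 1)) by (apply Rinv_0_lt_compat; lra). lra.
Qed.

Lemma SL_inv_sq_rev a n q : (1 <= a)%nat -> (a + n + 1 <= q)%nat ->
  SL a n (fun t => / ((INR q - INR t) ^ 2)) <= / INR (q - a - n).
Proof.
  intros Ha Hq.
  rewrite <- (SL_ext a n (fun t => (fun s => / (INR s ^ 2)) (q - t)%nat)).
  2:{ intros i Hi. rewrite minus_INR by lia. reflexivity. }
  rewrite (SL_refl a n q (fun s => / (INR s ^ 2))) by lia.
  replace (q - a - n)%nat with ((q + 1 - a - n) - 1)%nat by lia.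
  apply SL_inv_sq. lia.
Qed.

Lemma PI_bounds : 3 < PI <= 4.
Proof. split; [generalize PI2_3_2; lra | apply PI_4]. Qed.

Lemma sin_lb_eq a : sin_lb a = a - a^3/6 + a^5/120 - a^7/5040.
Proof. unfold sin_lb, sin_approx, sin_term. simpl. field. Qed.

Lemma sin_le_x x : 0 <= x -> sin x <= x.
Proof. intro H. destruct (Req_dec x 0) as [->|]; [rewrite sin_0; lra|]. left; apply sin_lt_x; lra. Qed.

Lemma sin_cubic x : 0 <= x <= PI -> x - x^3/6 <= sin x.
Proof.
  intro H. destruct (SIN x) as [H1 _]; try lra. rewrite sin_lb_eq in H1.
  assert (x <= 4) by (generalize PI_bounds; lra).
  assert (x^5/120 - x^7/5040 >= 0).
  { replace (x^5/120 - x^7/5040) with (x^5 * (42 - x^2)/5040) by field.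
    apply Rle_ge. apply Rmult_le_pos; [|lra]. apply Rmult_le_pos; [apply pow_le; lra| nra]. }
  lra.
Qed.

Lemma sin_third x : 0 <= x <= PI/2 -> x / 3 <= sin x.
Proof.
  intro H. generalize PI_bounds; intro. assert (x <= 2) by lra.
  assert (x - x^3/6 <= sin x) by (apply sin_cubic; lra). nra.
Qed.

Lemma abs_sin_le x : Rabs (sin x) <= Rabs x.
Proof.
  assert (forall y, 0 <= y -> Rabs (sin y) <= y).
  { intros y Hy. generalize PI_bounds; intro. apply Rabs_le. split.
    - destruct (Rle_lt_dec y PI). + generalize (sin_ge_0 y Hy r). lra.
      + generalize (SIN_bound y). lra.
    - apply sin_le_x; auto. }
  destruct (Rle_lt_dec 0 x).
  - rewrite (Rabs_pos_eq x) by lra. auto.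
  - rewrite <- (Ropp_involutive x). rewrite sin_neg, Rabs_Ropp, Rabs_Ropp. rewrite (Rabs_pos_eq (- x)) by lra. apply H. lra.
Qed.

Lemma cos_quad x : 1 - x^2/2 <= cos x <= 1.
Proof.
  split; [|generalize (COS_bound x); lra].
  replace (cos x) with (cos (2 * (x/2))) by (f_equal; field). rewrite cos_2a_sin.
  generalize (abs_sin_le (x/2)). intro H.
  assert (sin (x/2) * sin (x/2) <= (x/2)*(x/2)).
  { assert (Rabs (sin (x/2)) * Rabs (sin (x/2)) <= Rabs (x/2) * Rabs (x/2)).
    { apply Rmult_le_compat; try apply Rabs_pos; auto. }
    rewrite <- !Rabs_mult in H0. rewrite !Rabs_pos_eq in H0; try nra. }
  nra.
Qed.

Lemma sin_minus_x_pos x : 0 <= x <= PI -> 0 <= x - sin x <= x^3/6.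
Proof. intro H. generalize (sin_le_x x (proj1 H)) (sin_cubic x H). lra. Qed.

Lemma sin_minus_x x : Rabs x <= 3 -> Rabs (sin x - x) <= Rabs x ^ 3 / 6.
Proof.
  intro H. generalize PI_bounds; intro.
  destruct (Rle_lt_dec 0 x).
  - rewrite (Rabs_pos_eq x) in * by lra. generalize (sin_minus_x_pos x ltac:(lra)). intro.
    rewrite Rabs_minus_sym, Rabs_pos_eq; lra.
  - rewrite (Rabs_left x) in * by lra. generalize (sin_minus_x_pos (-x) ltac:(lra)). intro.
    rewrite sin_neg in H1.
    rewrite Rabs_pos_eq; lra.
Qed.

Lemma one_minus_cos x : Rabs (1 - cos x) <= x^2/2.
Proof. generalize (cos_quad x). intro. rewrite Rabs_pos_eq by lra. lra. Qed.

Lemma sq_sin_diff a : 0 <= a <= 2 -> 0 <= a^2 - sin a ^ 2 <= a^4/3.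
Proof.
  intro H. generalize PI_bounds; intro.
  generalize (sin_minus_x_pos a ltac:(lra)). intro H1.
  assert (0 <= sin a) by (apply sin_ge_0; lra).
  replace (a^2 - sin a ^2) with ((a - sin a) * (a + sin a)) by ring.
  split; [nra|]. nra.
Qed.

Lemma xcos_le_sin x : 0 < x <= PI/2 -> x * cos x <= sin x.
Proof.
  intro H. generalize PI_bounds; intro.
  assert (cos x <= 1 - x^2/2 + x^4/24).
  { replace (cos x) with (cos (2 * (x/2))) by (f_equal; field). rewrite cos_2a_sin.
    generalize (sin_cubic (x/2) ltac:(lra)). intro H4.
    assert (0 <= x/2 - (x/2)^3/6) by nra. nra. }
  generalize (sin_cubic x ltac:(lra)). intro H2.
  assert (x * cos x <= x * (1 - x^2/2 + x^4/24)) by (apply Rmult_le_compat_l; lra).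
  assert (x * (1 - x^2/2 + x^4/24) <= x - x^3/6).
  { assert (x^5/24 <= x^3/3).
    { replace (x^5) with (x^3 * x^2) by ring. assert (0 <= x^3) by (apply pow_le; lra). nra. }
    nra. }
  lra.
Qed.

Definition cot (x : R) := cos x / sin x.

Lemma cot_bounds x : 0 < x <= PI/2 -> 0 <= cot x <= / x /\ Rabs (cot x - / x) <= 2 * x.
Proof.
  intro H. generalize PI_bounds; intro.
  assert (Hs : x / 3 <= sin x) by (apply sin_third; lra).
  assert (0 < sin x) by lra.
  assert (0 <= cos x) by (apply cos_ge_0; lra).
  generalize (xcos_le_sin x H). intro Hc1.
  generalize (cos_quad x). intro Hc2. generalize (sin_le_x x ltac:(lra)). intro Hc3.
  unfold cot. split; [split|].
  - apply Rmult_le_pos; [lra| left; apply Rinv_0_lt_compat; lra].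
  - apply Rmult_le_reg_l with (x * sin x); [nra|].
    replace (x * sin x * (cos x / sin x)) with (x * cos x) by (field; lra).
    replace (x * sin x * / x) with (sin x) by (field; lra). lra.
  - replace (cos x / sin x - / x) with (- ((sin x - x * cos x) / (x * sin x))) by (field; lra).
    rewrite Rabs_Ropp. rewrite Rabs_pos_eq.
    2:{ apply Rmult_le_pos; [lra| left; apply Rinv_0_lt_compat; nra]. }
    apply Rmult_le_reg_l with (x * sin x); [nra|].
    replace (x * sin x * ((sin x - x * cos x) / (x * sin x))) with (sin x - x * cos x) by (field; lra).
    assert (sin x - x * cos x <= x^3/2) by nra.
    assert (x^3/2 <= x * sin x * (2 * x)) by nra. lra.
Qed.

Lemma ln_le_xm1 x : 0 < x -> ln x <= x - 1.
Proof.
  intro H. rewrite <- (ln_exp (x - 1)).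
  destruct (Req_dec x (exp (x-1))) as [E|E]; [rewrite <- E; lra|].
  left. apply ln_increasing; auto. generalize (exp_ineq1_le (x - 1)). lra.
Qed.

Lemma ln_lip a b m : 0 < m -> m <= a -> m <= b -> Rabs (ln a - ln b) <= Rabs (a - b) / m.
Proof.
  intros Hm Ha Hb.
  assert (forall u v, m <= u -> m <= v -> ln u - ln v <= Rabs (u - v) / m).
  { intros u v Hu Hv. replace (ln u - ln v) with (ln (u / v)).
    2:{ unfold Rdiv. rewrite ln_mult, ln_Rinv; try lra. apply Rinv_0_lt_compat; lra. }
    eapply Rle_trans. { apply ln_le_xm1. apply Rdiv_lt_0_compat; lra. }
    replace (u / v - 1) with ((u - v) / v) by (field; lra).
    apply Rle_trans with (Rabs (u - v) / v).
    { unfold Rdiv. apply Rmult_le_compat_r; [left; apply Rinv_0_lt_compat; lra| apply Rle_abs]. }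
    unfold Rdiv. apply Rmult_le_compat_l; [apply Rabs_pos|]. apply Rinv_le_contravar; lra. }
  apply Rabs_le. split.
  - rewrite Rabs_minus_sym. generalize (H b a Hb Ha). lra.
  - apply H; auto.
Qed.

Definition Fln (N : nat) (z : R) := ln (1 - z) + SL 1 N (fun j => / INR j * z ^ j).

Lemma deriv_SL a n z : (1 <= a)%nat ->
  derivable_pt_lim (fun z => SL a n (fun j => / INR j * z ^ j)) z (SL a n (fun j => z ^ pred j)).
Proof.
  revert a. induction n; intros a Ha.
  - unfold SL; simpl. apply derivable_pt_lim_const.
  - assert (E: derivable_pt_lim (fun z => / INR a * z ^ a + SL (S a) n (fun j => / INR j * z ^ j)) z
              (z ^ pred a + SL (S a) n (fun j => z ^ pred j))).
    { apply (derivable_pt_lim_plus (fun z => / INR a * z ^ a) (fun z => SL (S a) n (fun j => / INR j * z ^ j))).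
      - replace (z ^ pred a) with (/ INR a * (INR a * z ^ pred a)).
        2:{ field. apply not_0_INR. lia. }
        apply (derivable_pt_lim_scal (fun z => z ^ a)). apply derivable_pt_lim_pow.
      - apply IHn. lia. }
    exact E.
Qed.

Lemma geom_SL N z : SL 1 N (fun j => z ^ pred j) * (1 - z) = 1 - z ^ N.
Proof.
  induction N.
  - unfold SL; simpl. ring.
  - rewrite SL_S. replace (pred (1 + N)) with N by lia. simpl pow.
    replace ((SL 1 N (fun j : nat => z ^ Init.Nat.pred j) + z ^ N) * (1 - z)) with
      (SL 1 N (fun j : nat => z ^ Init.Nat.pred j) * (1 - z) + z ^ N * (1 - z)) by ring.
    rewrite IHN. ring.
Qed.

Lemma deriv_Fln N z : z < 1 -> derivable_pt_lim (Fln N) z (- z ^ N / (1 - z)).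
Proof.
  intro Hz.
  replace (- z ^ N / (1 - z)) with (/ (1 - z) * (0 - 1) + SL 1 N (fun j => z ^ pred j)).
  2:{ apply Rmult_eq_reg_r with (1 - z); [|lra].
      rewrite Rmult_plus_distr_r, geom_SL. field. lra. }
  apply (derivable_pt_lim_plus (fun z => ln (1 - z)) (fun z => SL 1 N (fun j => / INR j * z ^ j))).
  - apply (derivable_pt_lim_comp (fun z => 1 - z) ln).
    + apply (derivable_pt_lim_minus (fun _ => 1) (fun z => z)).
      * apply derivable_pt_lim_const.
      * apply derivable_pt_lim_id.
    + apply derivable_pt_lim_ln. lra.
  - apply deriv_SL. lia.
Qed.

Lemma Fln_0 N : Fln N 0 = 0.
Proof.
  unfold Fln. replace (1 - 0) with 1 by ring. rewrite ln_1.
  rewrite (SL_ext _ _ _ (fun _ => 0)).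
  - rewrite SL_const. ring.
  - intros i Hi. destruct i; [lia|]. simpl. ring.
Qed.

Lemma Fln_bound N z : Rabs z <= 3/4 -> Rabs (Fln N z) <= 4 * Rabs z ^ (N + 1).
Proof.
  intro Hz.
  assert (Hd : forall c, Rabs c <= Rabs z -> Rabs (- c ^ N / (1 - c)) <= 4 * Rabs z ^ N).
  { intros c Hc. assert (Rabs c <= 3/4) by lra.
    assert (1 - c >= 1/4) by (generalize (Rle_abs c); lra).
    unfold Rdiv. rewrite Rabs_mult, Rabs_Ropp, Rabs_inv, (Rabs_pos_eq (1 - c)) by lra. rewrite <- RPow_abs.
    assert (Rabs c ^ N <= Rabs z ^ N) by (apply pow_incr; split; [apply Rabs_pos|auto]).
    assert (/ (1 - c) <= 4). { replace 4 with (/ (1/4)) by field. apply Rinv_le_contravar; lra. }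
    assert (0 <= Rabs c ^ N) by (apply pow_le, Rabs_pos).
    assert (0 < / (1 - c)) by (apply Rinv_0_lt_compat; lra). nra. }
  destruct (Rtotal_order z 0) as [Hlt|[Heq|Hgt]].
  - destruct (MVT_cor2 (Fln N) (fun c => - c ^ N / (1 - c)) z 0 Hlt) as [c [Hc1 Hc2]].
    { intros c Hc. apply deriv_Fln. lra. }
    rewrite Fln_0 in Hc1.
    replace (Fln N z) with (- (- c ^ N / (1 - c) * (0 - z))) by lra.
    rewrite Rabs_Ropp, Rabs_mult. rewrite pow_add, pow_1.
    replace (0 - z) with (- z) by ring. rewrite Rabs_Ropp.
    assert (Rabs c <= Rabs z) by (rewrite !Rabs_left; lra).
    generalize (Hd c H). intro. assert (0 <= Rabs z) by apply Rabs_pos.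
    assert (0 <= Rabs (- c ^ N / (1 - c))) by apply Rabs_pos. nra.
  - subst. rewrite Fln_0, Rabs_R0. rewrite pow_add, pow_1. assert (0 <= 0 ^ N) by (apply pow_le; lra).
    assert (0 <= 4 * Rabs 0 ^ N * Rabs 0) by (rewrite Rabs_R0; lra). lra.
  - destruct (MVT_cor2 (Fln N) (fun c => - c ^ N / (1 - c)) 0 z Hgt) as [c [Hc1 Hc2]].
    { intros c Hc. apply deriv_Fln. generalize (Rle_abs z). lra. }
    rewrite Fln_0 in Hc1.
    replace (Fln N z) with (- c ^ N / (1 - c) * (z - 0)) by lra.
    rewrite Rabs_mult. rewrite pow_add, pow_1.
    replace (z - 0) with z by ring.
    assert (Rabs c <= Rabs z) by (rewrite !Rabs_pos_eq; lra).
    generalize (Hd c H). intro. assert (0 <= Rabs z) by apply Rabs_pos.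
    assert (0 <= Rabs (- c ^ N / (1 - c))) by apply Rabs_pos. nra.
Qed.

Lemma ratio_main a y : 0 < a <= y -> y <= PI/2 -> Rabs (a^2/y^2 - sin a^2/sin y^2) <= 4 * a^2.
Proof.
  intros Ha Hy. generalize PI_bounds; intro HP.
  assert (Hsy : y / 3 <= sin y) by (apply sin_third; lra).
  assert (Hsa : 0 <= sin a <= a) by (split; [apply sin_ge_0; lra | apply sin_le_x; lra]).
  generalize (sq_sin_diff a ltac:(lra)) (sq_sin_diff y ltac:(lra)). intros Da Dy.
  assert (0 < sin y) by lra.
  replace (a^2/y^2 - sin a^2/sin y^2) with ((a^2 - sin a^2)/y^2 - sin a^2 * ((y^2 - sin y^2)/(y^2 * sin y^2)))
    by (field; lra).
  assert (0 <= (a^2 - sin a^2)/y^2 <= a^2/3).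
  { split; [apply Rle_mult_inv_pos; [lra| apply pow_lt; lra]|].
    apply Rmult_le_reg_r with (y^2); [apply pow_lt; lra|].
    unfold Rdiv at 1. rewrite Rmult_assoc, Rinv_l, Rmult_1_r by (apply pow_nonzero; lra).
    assert (a^4/3 <= a^2/3 * y^2) by (replace (a^4) with (a^2*a^2) by ring; assert (a^2 <= y^2) by (apply pow_incr; lra); assert (0 <= a^2) by (apply pow_le; lra); nra).
    lra. }
  assert (0 <= (y^2 - sin y^2)/(y^2 * sin y^2) <= 3).
  { split; [apply Rle_mult_inv_pos; [lra| apply Rmult_lt_0_compat; apply pow_lt; lra]|].
    apply Rmult_le_reg_r with (y^2 * sin y^2); [apply Rmult_lt_0_compat; apply pow_lt; lra|].
    unfold Rdiv at 1. rewrite Rmult_assoc, Rinv_l, Rmult_1_r by (apply Rmult_integral_contrapositive; split; apply pow_nonzero; lra).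
    assert ((y/3)^2 <= sin y ^2) by (apply pow_incr; lra).
    assert (0 <= y^2) by (apply pow_le; lra).
    assert (y^4/3 <= 3 * (y^2 * sin y^2)) by (replace (y^4) with (9 * (y^2 * (y/3)^2)) by field; nra).
    lra. }
  assert (0 <= sin a ^ 2 <= a^2) by (split; [apply pow_le; lra| apply pow_incr; lra]).
  set (u := (a^2 - sin a^2)/y^2) in *. set (v := (y^2 - sin y^2)/(y^2 * sin y^2)) in *.
  assert (0 <= sin a ^2 * v <= 3 * a^2) by nra.
  apply Rabs_le. lra.
Qed.

Lemma Fln_1 z : Fln 1 z = ln (1 - z) + z.
Proof. unfold Fln, SL. simpl. field. Qed.

Lemma rho_decomp x d : 0 < sin x -> sin (x - d) / sin x = 1 - (sin d * cot x + (1 - cos d)).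
Proof. intro. unfold cot. rewrite sin_minus. field. lra. Qed.

Lemma pt_lemma x d Q : 0 < x <= PI/2 -> 100 <= Q -> Rabs d <= 2 / Q -> Rabs (d / x) <= 1/2 ->
  let E := ln (sin (x - d) / sin x) + d * cot x in
  Rabs E <= 4 * (Rabs (d / x) + d^2/2) ^ 2 + d^2 /\
  (d^2 + 2 * Rabs d * x <= 1/5 -> Rabs (E - (ln (1 - d / x) + d / x)) <= 6 * (d^2 + 2 * Rabs d * x)).
Proof.
  intros Hx HQ Hd Hw E. generalize PI_bounds; intro HP.
  assert (Hs : x / 3 <= sin x) by (apply sin_third; lra).
  destruct (cot_bounds x Hx) as [[Hc1 Hc2] Hc3].
  assert (Hd100 : Rabs d <= 2/100). { eapply Rle_trans; [apply Hd|]. unfold Rdiv. apply Rmult_le_compat_l; [lra|]. apply Rinv_le_contravar; lra. }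
  assert (Hd2 : d^2 <= 4 / 10000).
  { 
    replace (4/10000) with ((2/100)^2) by field. rewrite <- pow2_abs. apply pow_incr. split; [apply Rabs_pos| auto]. }
  assert (Hsd : Rabs (sin d) <= Rabs d) by apply abs_sin_le.
  assert (Hsd3 : Rabs (sin d - d) <= Rabs d ^ 3 / 6) by (apply sin_minus_x; lra).
  assert (Hcd : Rabs (1 - cos d) <= d^2/2) by apply one_minus_cos.
  set (v := sin d * cot x + (1 - cos d)).
  assert (Hrho : sin (x - d) / sin x = 1 - v) by (unfold v; apply rho_decomp; lra).
  assert (Hdx : Rabs d / x = Rabs (d / x)) by (unfold Rdiv; rewrite Rabs_mult, Rabs_inv, (Rabs_pos_eq x) by lra; reflexivity).
  assert (Hv1 : Rabs (sin d * cot x) <= Rabs (d / x)).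
  { rewrite Rabs_mult, (Rabs_pos_eq (cot x)) by lra. rewrite <- Hdx.
    apply Rle_trans with (Rabs d * / x); [apply Rmult_le_compat; try lra; apply Rabs_pos|]. unfold Rdiv; lra. }
  assert (Hv : Rabs v <= Rabs (d / x) + d^2/2).
  { unfold v. eapply Rle_trans; [apply Rabs_triang|]. lra. }
  assert (Hv34 : Rabs v <= 3/4) by lra.
  assert (HE : E = Fln 1 v - (sin d - d) * cot x - (1 - cos d)).
  { unfold E. rewrite Fln_1, Hrho. unfold v. ring. }
  assert (Hd3 : Rabs ((sin d - d) * cot x) <= d^2 / 12).
  { rewrite Rabs_mult, (Rabs_pos_eq (cot x)) by lra.
    apply Rle_trans with (Rabs d ^ 3 / 6 * / x); [apply Rmult_le_compat; try lra; apply Rabs_pos|].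
    replace (Rabs d ^ 3 / 6 * / x) with (Rabs d ^ 2 / 6 * (Rabs d / x)) by (field; lra).
    rewrite Hdx, pow2_abs. assert (0 <= d^2) by (apply pow2_ge_0).
    assert (0 <= Rabs (d / x)) by apply Rabs_pos. nra. }
  split.
  - rewrite HE. generalize (Fln_bound 1 v Hv34). intro HF. simpl (1 + 1)%nat in HF.
    assert (Rabs v ^ 2 <= (Rabs (d / x) + d^2/2) ^ 2) by (apply pow_incr; split; [apply Rabs_pos|lra]).
    assert (Rabs (Fln 1 v - (sin d - d) * cot x - (1 - cos d)) <= Rabs (Fln 1 v) + Rabs ((sin d - d) * cot x) + Rabs (1 - cos d)).
    { eapply Rle_trans; [apply Rabs_triang|]. rewrite Rabs_Ropp. 
      assert (Rabs (Fln 1 v - (sin d - d) * cot x) <= Rabs (Fln 1 v) + Rabs ((sin d - d) * cot x)).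
      { eapply Rle_trans; [apply Rabs_triang|]. rewrite Rabs_Ropp. lra. }
      lra. }
    assert (0 <= d^2) by apply pow2_ge_0. lra.
  - intro Hsm.
    set (w := d / x).
    assert (Hvw : Rabs (v - w) <= d^2 + 2 * Rabs d * x).
    { replace (v - w) with ((sin d - d) * cot x + d * (cot x - / x) + (1 - cos d)) by (unfold v, w; field; lra).
      assert (Rabs (d * (cot x - / x)) <= 2 * Rabs d * x).
      { rewrite Rabs_mult. assert (0 <= Rabs d) by apply Rabs_pos. nra. }
      eapply Rle_trans; [apply Rabs_triang|].
      assert (Rabs ((sin d - d) * cot x + d * (cot x - / x)) <= d^2/12 + 2 * Rabs d * x).
      { eapply Rle_trans; [apply Rabs_triang|]. lra. }
      assert (0 <= d^2) by apply pow2_ge_0. lra. }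
    assert (Hw1 : 1/2 <= 1 - w) by (generalize (Rle_abs w); unfold w; lra).
    assert (Hr1 : 1/4 <= 1 - v) by (generalize (Rle_abs (v - w)); lra).
    replace (E - (ln (1 - w) + w)) with ((ln (1 - v) - ln (1 - w)) + d * (cot x - / x)).
    2:{ unfold E. rewrite Hrho. unfold w. field. lra. }
    generalize (ln_lip (1 - v) (1 - w) (1/4) ltac:(lra) Hr1 ltac:(lra)). intro Hl.
    replace (1 - v - (1 - w)) with (- (v - w)) in Hl by ring. rewrite Rabs_Ropp in Hl.
    assert (Rabs (d * (cot x - / x)) <= 2 * Rabs d * x).
    { rewrite Rabs_mult. assert (0 <= Rabs d) by apply Rabs_pos. nra. }
    eapply Rle_trans; [apply Rabs_triang|].
    assert (Rabs (v - w) / (1/4) = 4 * Rabs (v - w)) by field.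
    assert (0 <= d^2) by apply pow2_ge_0.
    assert (0 <= Rabs d * x) by (apply Rmult_le_pos; [apply Rabs_pos| lra]).
    clear -Hvw Hl H H0 H1 H2. lra.
Qed.

Definition xi' (q r t : nat) := frac (INR t * INR r / INR q) - / 2.
Definition Hyp (q r : nat) (c L : R) : Prop :=
  (100 <= q)%nat /\ 0 < c < 1 /\ L = c / INR q /\
  (forall t, (1 <= t <= q - 1)%nat -> frac (INR (q - t) * INR r / INR q) = 1 - frac (INR t * INR r / INR q)).

Lemma le_q1 t q : (t <= q - 1)%nat -> (1 <= q)%nat -> INR t <= INR q - 1.
Proof. intros. replace (INR q - 1) with (INR (q - 1)) by (rewrite minus_INR by lia; reflexivity). apply le_INR; lia. Qed.

Section Core.
Variables (q r : nat) (c L : R).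
Hypothesis H : Hyp q r c L.

Definition xs (t : nat) := PI * INR t / INR q.
Definition ys (t : nat) := PI * (INR t / INR q - L * xi' q r t).
Definition ss (t : nat) := 2 * sin (ys t).

Lemma Q_ge : 100 <= INR q.
Proof. destruct H as [Hq _]. apply (le_INR 100) in Hq. simpl in Hq. lra. Qed.

Lemma c_bnd : 0 < c < 1.
Proof. apply H. Qed.

Lemma L_bnd : 0 < L /\ L * INR q = c /\ L < / INR q.
Proof.
  destruct H as [_ [Hc [HL _]]]. generalize Q_ge; intro.
  subst L. split; [|split].
  - apply Rdiv_lt_0_compat; lra.
  - field; lra.
  - unfold Rdiv. apply Rmult_lt_reg_l with (INR q); [lra|].
    replace (INR q * (c * / INR q)) with c by (field; lra). rewrite Rinv_r; lra.
Qed.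

Lemma xi_bnd t : -1/2 <= xi' q r t < 1/2.
Proof. unfold xi', frac. destruct (base_fp (INR t * INR r / INR q)). lra. Qed.

Lemma xi_sym t : (1 <= t <= q - 1)%nat -> xi' q r (q - t) = - xi' q r t.
Proof. intro Ht. unfold xi'. destruct H as [_ [_ [_ Hs]]]. rewrite Hs by auto. lra. Qed.

Lemma xi_0 : xi' q r 0 = - / 2.
Proof. unfold xi', frac. simpl. replace (0 * INR r / INR q) with 0 by (unfold Rdiv; ring). rewrite fp_R0. ring. Qed.

Lemma INR_sub t : (t <= q)%nat -> INR (q - t) = INR q - INR t.
Proof. intro; apply minus_INR; auto. Qed.

Lemma ys_sym t : (1 <= t <= q - 1)%nat -> ys (q - t) = PI - ys t.
Proof.
  intro Ht. unfold ys. rewrite xi_sym, INR_sub by lia. generalize Q_ge; intro.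
  field. lra.
Qed.

Lemma xs_sym t : (t <= q)%nat -> xs (q - t) = PI - xs t.
Proof. intro Ht. unfold xs. rewrite INR_sub by lia. generalize Q_ge; intro. field. lra. Qed.

Lemma ys_0 : ys 0 = PI * L / 2.
Proof. unfold ys. rewrite xi_0. simpl. unfold Rdiv. ring. Qed.

Lemma ys_range t : PI * (INR t / INR q - L / 2) <= ys t <= PI * (INR t / INR q + L / 2).
Proof.
  unfold ys. generalize (xi_bnd t) L_bnd PI_bounds. intros Hx [HL _] HP.
  split; apply Rmult_le_compat_l; try lra; nra.
Qed.

Lemma sin_a_pos : 0 < sin (PI * L / 2) /\ sin (PI * L / 2) <= 2 / INR q.
Proof.
  generalize L_bnd PI_bounds Q_ge. intros [HL [_ HL2]] HP HQ.
  assert (L <= 1 / 100). { apply Rle_trans with (/ INR q); [lra|]. replace (1/100) with (/100) by field. apply Rinv_le_contravar; lra. }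
  split.
  - apply sin_gt_0; nra.
  - eapply Rle_trans; [apply sin_le_x; nra|]. assert (L * INR q <= 1) by (rewrite (proj1 (proj2 L_bnd)); generalize c_bnd; lra).
    apply Rmult_le_reg_r with (INR q); [lra|]. unfold Rdiv. replace (2 * / INR q * INR q) with 2 by (field; lra). nra.
Qed.

Lemma ys_ge_a t : (1 <= t <= q - 1)%nat -> PI * L / 2 <= ys t <= PI - PI * L / 2.
Proof.
  intro Ht. generalize (ys_range t) L_bnd PI_bounds Q_ge. intros [H1 H2] [HL [HLQ HL2]] HP HQ.
  assert (1 <= INR t) by (apply (le_INR 1); lia).
  assert (INR t <= INR q - 1) by (apply le_q1; lia).
  assert (L * INR q < 1) by (generalize c_bnd; lra).
  assert (Lq : L < 1 / INR q) by (unfold Rdiv; lra).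
  assert (INR t / INR q >= 1 / INR q). { unfold Rdiv. apply Rle_ge, Rmult_le_compat_r; [left; apply Rinv_0_lt_compat; lra| lra]. }
  assert (INR t / INR q <= 1 - 1 / INR q). { replace (1 - 1 / INR q) with ((INR q - 1) / INR q) by (field; lra). unfold Rdiv. apply Rmult_le_compat_r; [left; apply Rinv_0_lt_compat; lra| lra]. }
  split; nra.
Qed.

Lemma sin_ys_ge t : (1 <= t <= q - 1)%nat -> sin (PI * L / 2) <= sin (ys t).
Proof.
  intro Ht. generalize (ys_ge_a t Ht) L_bnd PI_bounds Q_ge. intros [H1 H2] [HL _] HP HQ.
  assert (0 < PI * L / 2) by nra.
  destruct (Rle_lt_dec (ys t) (PI/2)).
  - apply sin_incr_1; lra.
  - rewrite <- (sin_PI_x (ys t)). apply sin_incr_1; lra.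
Qed.

Lemma sin_ys_pos t : (1 <= t <= q - 1)%nat -> 0 < sin (ys t).
Proof. intro. generalize (sin_ys_ge t H0) sin_a_pos. lra. Qed.

Lemma sin_ys_lower t : (1 <= t <= q - 1)%nat ->
  INR t / (2 * INR q) <= sin (ys t) \/ (INR q - INR t) / (2 * INR q) <= sin (ys t).
Proof.
  intro Ht. generalize (ys_range t) L_bnd PI_bounds Q_ge. intros [H1 H2] [HL [HLQ HL2]] HP HQ.
  generalize (ys_ge_a t Ht). intros [H3 H4].
  assert (1 <= INR t) by (apply (le_INR 1); lia).
  assert (INR t <= INR q - 1) by (apply le_q1; lia).
  assert (Lq : L * INR q < 1) by (generalize c_bnd; lra).
  destruct (Rle_lt_dec (ys t) (PI/2)).
  - left. generalize (sin_third (ys t) ltac:(lra)). intro.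
    assert (ys t >= PI * (INR t / (2 * INR q))).
    { eapply Rge_trans; [apply Rle_ge, H1|]. apply Rle_ge, Rmult_le_compat_l; [lra|].
      apply Rmult_le_reg_r with (2 * INR q); [lra|].
      replace ((INR t / INR q - L / 2) * (2 * INR q)) with (2 * INR t - L * INR q) by (field; lra).
      replace (INR t / (2 * INR q) * (2 * INR q)) with (INR t) by (field; lra). lra. }
    assert (0 <= INR t / (2 * INR q)) by (apply Rle_mult_inv_pos; lra).
    nra.
  - right. rewrite <- (sin_PI_x (ys t)). generalize (sin_third (PI - ys t) ltac:(lra)). intro.
    assert (PI - ys t >= PI * ((INR q - INR t) / (2 * INR q))).
    { assert (PI - ys t >= PI - PI * (INR t / INR q + L / 2)) by lra.
      eapply Rge_trans; [apply H7|].
      replace (PI - PI * (INR t / INR q + L / 2)) with (PI * ((2 * INR q - 2 * INR t - L * INR q) / (2 * INR q))) by (field; lra).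
      apply Rle_ge, Rmult_le_compat_l; [lra|]. unfold Rdiv. apply Rmult_le_compat_r; [left; apply Rinv_0_lt_compat; lra|lra]. }
    assert (0 <= (INR q - INR t) / (2 * INR q)) by (apply Rle_mult_inv_pos; lra).
    nra.
Qed.

Lemma ratio_tail t : (1 <= t <= q - 1)%nat ->
  sin (PI * L / 2) ^ 2 / sin (ys t) ^ 2 <= 16 / INR t ^ 2 + 16 / (INR q - INR t) ^ 2.
Proof.
  intro Ht. generalize sin_a_pos Q_ge (sin_ys_pos t Ht). intros [Ha1 Ha2] HQ Hy.
  assert (1 <= INR t) by (apply (le_INR 1); lia).
  assert (INR t <= INR q - 1) by (apply le_q1; lia).
  assert (sin (PI * L / 2) ^ 2 <= 4 / INR q ^ 2).
  { replace (4 / INR q ^ 2) with ((2 / INR q) ^ 2) by (field; lra). apply pow_incr; lra. }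
  assert (0 < 16 / INR t ^ 2) by (apply Rdiv_lt_0_compat; [lra| apply pow_lt; lra]).
  assert (0 < 16 / (INR q - INR t) ^ 2) by (apply Rdiv_lt_0_compat; [lra| apply pow_lt; lra]).
  assert (forall m, 0 < m -> m / (2 * INR q) <= sin (ys t) -> sin (PI * L / 2) ^ 2 / sin (ys t) ^ 2 <= 16 / m ^ 2).
  { intros m Hm Hs. apply Rmult_le_reg_r with (sin (ys t) ^ 2); [apply pow_lt; lra|].
    unfold Rdiv at 1. rewrite Rmult_assoc, Rinv_l, Rmult_1_r by (apply pow_nonzero; lra).
    eapply Rle_trans; [apply H2|].
    assert ((m / (2 * INR q)) ^ 2 <= sin (ys t) ^ 2) by (apply pow_incr; split; [apply Rle_mult_inv_pos; lra| auto]).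
    apply Rle_trans with (16 / m ^ 2 * (m / (2 * INR q)) ^ 2).
    - right. field. lra.
    - apply Rmult_le_compat_l; [left; apply Rdiv_lt_0_compat; [lra| apply pow_lt; lra]|auto]. }
  destruct (sin_ys_lower t Ht).
  - generalize (H5 (INR t) ltac:(lra) H6). lra.
  - generalize (H5 (INR q - INR t) ltac:(lra) H6). lra.
Qed.

Lemma h_eq t : (1 <= t)%nat -> / (4 * (INR t / c - xi' q r t) ^ 2) = (PI * L / 2) ^ 2 / ys t ^ 2.
Proof.
  intro Ht. generalize Q_ge c_bnd (xi_bnd t) PI_bounds. intros HQ Hc Hx HP.
  assert (1 <= INR t) by (apply (le_INR 1); lia).
  destruct H as [_ [_ [HL _]]].
  unfold ys. rewrite HL.
  assert (INR t - c * xi' q r t > 0) by nra.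
  assert (E1 : INR t / INR q - c / INR q * xi' q r t <> 0).
  { replace (INR t / INR q - c / INR q * xi' q r t) with ((INR t - c * xi' q r t) / INR q) by (field; lra).
    apply Rgt_not_eq. apply Rdiv_lt_0_compat; lra. }
  assert (E2 : INR t / c - xi' q r t <> 0).
  { replace (INR t / c - xi' q r t) with ((INR t - c * xi' q r t) / c) by (field; lra).
    apply Rgt_not_eq. apply Rdiv_lt_0_compat; lra. }
  field. repeat split; try lra; auto.
Qed.

Lemma PL_one a n : PL a n (fun _ => 1) = 1.
Proof. revert a; induction n; intro a; [reflexivity|]. rewrite PL_cons, IHn. ring. Qed.

Lemma coreC k : (1 <= k)%nat -> (2 * k + 1 <= q)%nat ->
  Rabs (PL 1 (q - 1) (fun t => sqrt (1 - ss 0 ^ 2 / ss t ^ 2)) -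
        PL 1 k (fun t => 1 - / (4 * (INR t / c - xi' q r t) ^ 2))) <= 48 / INR k.
Proof.
  intros Hk Hkq.
  generalize Q_ge c_bnd PI_bounds L_bnd sin_a_pos. intros HQ Hc HP [HL [HLQ HL2]] [Ha1 Ha2].
  set (a := PI * L / 2) in *.
  assert (Ha0 : 0 < a) by (unfold a; nra).
  assert (Hk1 : 1 <= INR k) by (apply (le_INR 1); lia).
  assert (Hkq' : 2 * INR k + 1 <= INR q) by (replace (2 * INR k + 1) with (INR (2 * k + 1)) by (rewrite plus_INR, mult_INR; simpl; ring); apply le_INR; lia).
  set (f := fun t => 1 - sin a ^ 2 / sin (ys t) ^ 2).
  assert (Hf : forall t, (1 <= t <= q - 1)%nat -> 1 - ss 0 ^ 2 / ss t ^ 2 = f t).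
  { intros t Ht. unfold f, ss. rewrite ys_0. fold a. generalize (sin_ys_pos t Ht). intro. field. lra. }
  assert (Hf01 : forall t, (1 <= t <= q - 1)%nat -> 0 <= f t <= 1).
  { intros t Ht. unfold f. generalize (sin_ys_pos t Ht) (sin_ys_ge t Ht). fold a. intros.
    assert (0 <= sin a ^ 2 / sin (ys t) ^ 2 <= 1).
    { split; [apply Rle_mult_inv_pos; [apply pow_le; lra| apply pow_lt; lra]|].
      apply Rmult_le_reg_r with (sin (ys t) ^ 2); [apply pow_lt; lra|].
      unfold Rdiv. rewrite Rmult_assoc, Rinv_l, Rmult_1_r, Rmult_1_l by (apply pow_nonzero; lra).
      apply pow_incr; lra. }
    lra. }
  set (g := fun t => sqrt (f t)).
  rewrite (PL_ext 1 (q - 1) _ g) by (intros t Ht; unfold g; rewrite Hf by lia; reflexivity).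
  assert (Hg01 : forall t, (1 <= t <= q - 1)%nat -> 0 <= g t <= 1 /\ f t <= g t).
  { intros t Ht. unfold g. generalize (Hf01 t Ht). intro.
    split; [split; [apply sqrt_pos|]|].
    - rewrite <- sqrt_1. apply sqrt_le_1_alt. lra.
    - assert (0 <= sqrt (f t)) by apply sqrt_pos.
      assert (sqrt (f t) * sqrt (f t) = f t) by (apply sqrt_sqrt; lra).
      assert (sqrt (f t) <= 1) by (rewrite <- sqrt_1; apply sqrt_le_1_alt; lra). nra. }
  rewrite (PL_sym q k g) by (try lia; intros t Ht; unfold g, f; rewrite ys_sym, sin_PI_x by lia; reflexivity).
  replace (PL 1 k g * PL 1 k g) with (PL 1 k f).
  2:{ rewrite <- PL_mult. apply PL_ext. intros i Hi. unfold g. rewrite sqrt_sqrt; [reflexivity|].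
      apply Hf01; lia. }
  set (h := fun t => 1 - / (4 * (INR t / c - xi' q r t) ^ 2)).
  set (R := PL (k + 1) (q - 1 - 2 * k) g).
  assert (HR : 0 <= R <= 1) by (apply PL_01; intros; apply Hg01; lia).
  assert (HPf : 0 <= PL 1 k f <= 1) by (apply PL_01; intros; apply Hf01; lia).
  assert (Hhf : forall t, (1 <= t <= k)%nat -> 0 <= h t <= 1 /\ Rabs (f t - h t) <= 16 / INR q ^ 2).
  { intros t Ht. unfold h. rewrite h_eq by lia. fold a.
    assert (Ht' : (1 <= t <= q - 1)%nat) by lia.
    generalize (ys_ge_a t Ht') (ys_range t). fold a. intros [Hy1 _] [_ Hy2].
    assert (INR t <= INR k) by (apply le_INR; lia).
    assert (ys t <= PI / 2).
    { eapply Rle_trans; [apply Hy2|]. replace (PI / 2) with (PI * (1/2)) by field.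
      apply Rmult_le_compat_l; [lra|].
      apply Rmult_le_reg_r with (2 * INR q); [lra|].
      replace ((INR t / INR q + L / 2) * (2 * INR q)) with (2 * INR t + L * INR q) by (field; lra).
      lra. }
    assert (0 < ys t) by lra.
    split.
    - assert (0 <= a ^ 2 / ys t ^ 2 <= 1).
      { split; [apply Rle_mult_inv_pos; [apply pow_le; lra| apply pow_lt; lra]|].
        apply Rmult_le_reg_r with (ys t ^ 2); [apply pow_lt; lra|].
        unfold Rdiv. rewrite Rmult_assoc, Rinv_l, Rmult_1_r, Rmult_1_l by (apply pow_nonzero; lra).
        apply pow_incr; lra. }
      lra.
    - unfold f. replace (1 - sin a ^ 2 / sin (ys t) ^ 2 - (1 - a ^ 2 / ys t ^ 2)) with (a ^ 2 / ys t ^ 2 - sin a ^ 2 / sin (ys t) ^ 2) by ring.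
      eapply Rle_trans; [apply ratio_main; lra|].
      assert (a <= 2 / INR q).
      { unfold a. apply Rmult_le_reg_r with (INR q); [lra|]. unfold Rdiv.
        replace (PI * L * / 2 * INR q) with (PI * (L * INR q) / 2) by field.
        replace (2 * / INR q * INR q) with 2 by (field; lra). nra. }
      replace (16 / INR q ^ 2) with (4 * (2 / INR q) ^ 2) by (field; lra).
      apply Rmult_le_compat_l; [lra|]. apply pow_incr. lra. }
  assert (HPh : 0 <= PL 1 k h <= 1) by (apply PL_01; intros; apply Hhf; lia).
  assert (E1 : Rabs (PL 1 k f - PL 1 k h) <= 16 / INR k).
  { eapply Rle_trans; [apply PL_diff; intros i Hi; split; [apply Hf01; lia| apply Hhf; lia]|].
    eapply Rle_trans; [apply SL_le with (g := fun _ => 16 / INR q ^ 2); intros i Hi; apply Hhf; lia|].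
    rewrite SL_const.
    apply Rmult_le_reg_r with (INR k * INR q ^ 2 / 16); [apply Rdiv_lt_0_compat; [apply Rmult_lt_0_compat; [lra| apply pow_lt; lra]|lra]|].
    replace (INR k * (16 / INR q ^ 2) * (INR k * INR q ^ 2 / 16)) with (INR k * INR k) by (field; lra).
    replace (16 / INR k * (INR k * INR q ^ 2 / 16)) with (INR q ^ 2) by (field; lra).
    nra. }
  assert (E2 : Rabs (R - 1) <= 32 / INR k).
  { unfold R. rewrite <- (PL_one (k + 1) (q - 1 - 2 * k)).
    eapply Rle_trans; [apply PL_diff; intros i Hi; split; [apply Hg01; lia| lra]|].
    apply Rle_trans with (SL (k + 1) (q - 1 - 2 * k) (fun t => 16 * / INR t ^ 2 + 16 * / (INR q - INR t) ^ 2)).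
    { apply SL_le. intros i Hi. assert (Hi' : (1 <= i <= q - 1)%nat) by lia.
      generalize (Hg01 i Hi') (ratio_tail i Hi'). fold a. intros [[_ Hg1] Hfg] Hrt.
      rewrite Rabs_minus_sym, Rabs_pos_eq by lra. unfold f in Hfg. unfold Rdiv in Hrt. lra. }
    rewrite SL_plus, !SL_scal.
    generalize (SL_inv_sq (k + 1) (q - 1 - 2 * k) ltac:(lia)) (SL_inv_sq_rev (k + 1) (q - 1 - 2 * k) q ltac:(lia) ltac:(lia)).
    replace (k + 1 - 1)%nat with k by lia. replace (q - (k + 1) - (q - 1 - 2 * k))%nat with k by lia.
    intros. unfold Rdiv. lra. }
  replace (PL 1 k f * R - PL 1 k h) with ((PL 1 k f - PL 1 k h) * R + PL 1 k h * (R - 1)) by ring.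
  eapply Rle_trans; [apply Rabs_triang|]. rewrite !Rabs_mult.
  rewrite (Rabs_pos_eq R), (Rabs_pos_eq (PL 1 k h)) by lra.
  assert (0 <= Rabs (PL 1 k f - PL 1 k h)) by apply Rabs_pos.
  assert (0 <= Rabs (R - 1)) by apply Rabs_pos.
  assert (Rabs (PL 1 k f - PL 1 k h) * R <= 16 / INR k) by nra.
  assert (PL 1 k h * Rabs (R - 1) <= 32 / INR k) by nra.
  replace (48 / INR k) with (16 / INR k + 32 / INR k) by (field; lra). lra.
Qed.

Lemma INR_le_q1 t : (1 <= t <= q - 1)%nat -> 1 <= INR t <= INR q - 1.
Proof. intro. split; [apply (le_INR 1); lia| apply le_q1; lia]. Qed.

Lemma xs_range t : (1 <= t <= q - 1)%nat -> 0 < xs t < PI.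
Proof.
  intro Ht. generalize (INR_le_q1 t Ht) Q_ge PI_bounds. intros [H1 H2] HQ HP. unfold xs.
  split; [apply Rdiv_lt_0_compat; nra|].
  apply Rmult_lt_reg_r with (INR q); [lra|]. unfold Rdiv. rewrite Rmult_assoc, Rinv_l by lra. nra.
Qed.

Lemma sin_xs_pos t : (1 <= t <= q - 1)%nat -> 0 < sin (xs t).
Proof. intro Ht. apply sin_gt_0; apply xs_range; auto. Qed.

Lemma xs_half t : (2 * t <= q)%nat -> xs t <= PI / 2.
Proof.
  intro Ht. generalize Q_ge PI_bounds. intros HQ HP. unfold xs.
  assert (2 * INR t <= INR q) by (replace (2 * INR t) with (INR (2 * t)) by (rewrite mult_INR; reflexivity); apply le_INR; lia).
  apply Rmult_le_reg_r with (INR q); [lra|]. unfold Rdiv. rewrite Rmult_assoc, Rinv_l by lra. nra.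
Qed.

Lemma ys_eq t : ys t = xs t - PI * L * xi' q r t.
Proof. unfold ys, xs. unfold Rdiv. ring. Qed.

Definition rho t := ss t / (2 * sin (xs t)).
Definition uu t := PI * L * xi' q r t * cot (xs t).
Definition EE t := ln (rho t) + uu t.

Lemma rho_eq t : (1 <= t <= q - 1)%nat -> rho t = sin (xs t - PI * L * xi' q r t) / sin (xs t).
Proof. intro Ht. unfold rho, ss. rewrite ys_eq. generalize (sin_xs_pos t Ht). intro. field. lra. Qed.

Lemma rho_pos t : (1 <= t <= q - 1)%nat -> 0 < rho t.
Proof. intro Ht. unfold rho, ss. generalize (sin_xs_pos t Ht) (sin_ys_pos t Ht). intros.
  apply Rdiv_lt_0_compat; lra. Qed.

Lemma cot_PI_x x : cot (PI - x) = - cot x.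
Proof. unfold cot. rewrite sin_PI_x, cos_minus, cos_PI, sin_PI. unfold Rdiv. ring. Qed.

Lemma rho_sym t : (1 <= t <= q - 1)%nat -> rho (q - t) = rho t.
Proof. intro Ht. unfold rho, ss. rewrite ys_sym, xs_sym, !sin_PI_x by lia. reflexivity. Qed.

Lemma uu_sym t : (1 <= t <= q - 1)%nat -> uu (q - t) = uu t.
Proof. intro Ht. unfold uu. rewrite xs_sym, cot_PI_x, xi_sym by lia. ring. Qed.

Lemma EE_sym t : (1 <= t <= q - 1)%nat -> EE (q - t) = EE t.
Proof. intro Ht. unfold EE. rewrite rho_sym, uu_sym by auto. reflexivity. Qed.

Lemma w_eq t : (1 <= t)%nat -> PI * L * xi' q r t / xs t = c * xi' q r t / INR t.
Proof.
  intro Ht. generalize Q_ge PI_bounds L_bnd. intros HQ HP [_ [HLQ _]].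
  assert (1 <= INR t) by (apply (le_INR 1); lia). unfold xs. rewrite <- HLQ. field. lra.
Qed.

Lemma xi_abs t : Rabs (xi' q r t) <= 1/2.
Proof. generalize (xi_bnd t). intro. apply Rabs_le. lra. Qed.

Definition Dx t := SL 1 t (xi' q r).

Lemma Dx_bnd t : Rabs (Dx t) <= INR t / 2.
Proof. unfold Dx. eapply Rle_trans; [apply SL_bound with (B := 1/2); intros; apply xi_abs|]. lra. Qed.

Lemma cot_diff a b : sin a <> 0 -> sin b <> 0 -> cot a - cot b = sin (b - a) / (sin a * sin b).
Proof. intros. unfold cot. rewrite sin_minus. field. auto. Qed.

Lemma B1_bound :
  let M := ((q - 1) / 2)%nat in
  Rabs (- SL 1 (q - 1) uu - (-2 * PI ^ 2 * c / INR q ^ 2 *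
     SL 1 (M - 1) (fun t => Dx t / (sin (xs t) * sin (xs (S t)))))) <= 50 / INR q.
Proof.
  intro M. generalize Q_ge PI_bounds L_bnd c_bnd. intros HQ HP [HL [HLQ HL2]] Hc.
  destruct H as [Hq _].
  assert (HM1 : (2 * M + 1 <= q)%nat) by (unfold M; generalize (Nat.div_mod (q - 1) 2) (Nat.mod_upper_bound (q - 1) 2); lia).
  assert (HM2 : (q <= 2 * M + 2)%nat) by (unfold M; generalize (Nat.mod_upper_bound (q - 1) 2) (Nat.div_mod (q - 1) 2); lia).
  assert (HM3 : (1 <= M)%nat) by lia.
  assert (HMr1 : 2 * INR M + 1 <= INR q) by (replace (2 * INR M + 1) with (INR (2 * M + 1)) by (rewrite plus_INR, mult_INR; simpl; ring); apply le_INR; lia).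
  assert (HMr2 : INR q <= 2 * INR M + 2) by (replace (2 * INR M + 2) with (INR (2 * M + 2)) by (rewrite plus_INR, mult_INR; simpl; ring); apply le_INR; lia).
  rewrite (SL_sym q M uu HM1 uu_sym).
  assert (Hmid : SL (M + 1) (q - 1 - 2 * M) uu = 0).
  { rewrite (SL_ext _ _ _ (fun _ => 0)); [rewrite SL_const; ring|].
    intros i Hi. assert (Hi2 : (2 * i = q)%nat) by lia.
    unfold uu, cot, xs. replace (PI * INR i / INR q) with (PI / 2).
    - rewrite cos_PI2. unfold Rdiv. ring.
    - rewrite <- Hi2, mult_INR. simpl. field. assert (0 < INR i) by (apply lt_0_INR; lia). lra. }
  rewrite Hmid, Rplus_0_r.
  replace M with (S (M - 1)) at 1 by lia.
  unfold uu. rewrite (SL_ext 1 (S (M - 1)) _ (fun t => PI * L * (xi' q r t * cot (xs t)))) by (intros; ring).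
  rewrite SL_scal, abel. fold (Dx (S (M - 1))). replace (S (M - 1)) with M by lia.
  set (S := SL 1 (M - 1) (fun t => Dx t / (sin (xs t) * sin (xs (S t))))).
  rewrite (SL_ext 1 (M - 1) _ (fun t => sin (PI / INR q) * (Dx t / (sin (xs t) * sin (xs (Datatypes.S t)))))).
  2:{ intros i Hi. fold (Dx i). rewrite cot_diff.
      - replace (xs (Datatypes.S i) - xs i) with (PI / INR q) by (unfold xs; rewrite S_INR; field; lra). field.
        split; apply Rgt_not_eq; apply sin_xs_pos; lia.
      - apply Rgt_not_eq; apply sin_xs_pos; lia.
      - apply Rgt_not_eq; apply sin_xs_pos; lia. }
  rewrite SL_scal. fold S.
  assert (HD : Rabs (Dx M) <= INR q / 4) by (eapply Rle_trans; [apply Dx_bnd|]; lra).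
  assert (Hcot : Rabs (cot (xs M)) <= 12 / INR q).
  { assert (Hx1 : PI / 2 - PI / INR q <= xs M <= PI / 2 - PI / (2 * INR q)).
    { unfold xs. split.
      - apply Rmult_le_reg_r with (2 * INR q); [lra|].
        replace ((PI / 2 - PI / INR q) * (2 * INR q)) with (PI * (INR q - 2)) by (field; lra).
        replace (PI * INR M / INR q * (2 * INR q)) with (PI * (2 * INR M)) by (field; lra).
        apply Rmult_le_compat_l; lra.
      - apply Rmult_le_reg_r with (2 * INR q); [lra|].
        replace ((PI / 2 - PI / (2 * INR q)) * (2 * INR q)) with (PI * (INR q - 1)) by (field; lra).
        replace (PI * INR M / INR q * (2 * INR q)) with (PI * (2 * INR M)) by (field; lra).
        apply Rmult_le_compat_l; lra. }
    assert (HPQ : PI / INR q <= 4 / 100).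
    { apply Rmult_le_reg_r with (INR q); [lra|]. unfold Rdiv. rewrite Rmult_assoc, Rinv_l by lra. nra. }
    assert (0 < PI / (2 * INR q)) by (apply Rdiv_lt_0_compat; lra).
    assert (Hs : xs M / 3 <= sin (xs M)) by (apply sin_third; lra).
    assert (Hcos : 0 <= cos (xs M) <= PI / INR q).
    { rewrite <- sin_shift. split; [apply sin_ge_0; lra|]. eapply Rle_trans; [apply sin_le_x; lra| lra]. }
    unfold cot. unfold Rdiv. rewrite Rabs_mult, Rabs_inv, (Rabs_pos_eq (cos _)), (Rabs_pos_eq (sin _)) by lra.
    apply Rle_trans with (PI / INR q * 3).
    - apply Rmult_le_compat; try lra. left; apply Rinv_0_lt_compat; lra.
      replace 3 with (/ (1/3)) by field. apply Rinv_le_contravar; lra.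
    - unfold Rdiv. replace (12 * / INR q) with (4 * / INR q * 3) by ring.
      apply Rmult_le_compat_r; [lra|]. apply Rmult_le_compat_r; [left; apply Rinv_0_lt_compat; lra| lra]. }
  assert (HS : Rabs S <= INR q ^ 3 / 4).
  { unfold S. eapply Rle_trans; [apply SL_bound with (B := INR q ^ 2 / 2)|].
    - intros i Hi. assert (Hi1 : 1 <= INR i) by (apply (le_INR 1); lia).
      assert (2 * INR i + 2 <= INR q) by (replace (2 * INR i + 2) with (INR (2 * i + 2)) by (rewrite plus_INR, mult_INR; simpl; ring); apply le_INR; lia).
      assert (Hs1 : INR i / INR q <= sin (xs i)).
      { eapply Rle_trans; [|apply sin_third; split; [left; apply xs_range; lia| apply xs_half; lia]].
        unfold xs. replace (PI * INR i / INR q / 3) with ((INR i / INR q) * (PI / 3)) by (field; lra).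
        assert (0 <= INR i / INR q) by (apply Rle_mult_inv_pos; lra).
        rewrite <- (Rmult_1_r (INR i / INR q)) at 1. apply Rmult_le_compat_l; lra. }
      assert (Hs2 : INR i / INR q <= sin (xs (Datatypes.S i))).
      { eapply Rle_trans; [|apply sin_third; split; [left; apply xs_range; lia| apply xs_half; lia]].
        unfold xs. rewrite S_INR. replace (PI * (INR i + 1) / INR q / 3) with (((INR i + 1) / INR q) * (PI / 3)) by (field; lra).
        assert (INR i / INR q <= (INR i + 1) / INR q) by (unfold Rdiv; apply Rmult_le_compat_r; [left; apply Rinv_0_lt_compat; lra| lra]).
        assert (0 <= INR i / INR q) by (apply Rle_mult_inv_pos; lra).
        apply Rle_trans with ((INR i + 1) / INR q); [lra|].
        rewrite <- (Rmult_1_r ((INR i + 1) / INR q)) at 1. apply Rmult_le_compat_l; lra. }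
      assert (0 < INR i / INR q) by (apply Rdiv_lt_0_compat; lra).
      unfold Rdiv at 1. rewrite Rabs_mult, Rabs_inv, Rabs_mult, (Rabs_pos_eq (sin (xs i))), (Rabs_pos_eq (sin (xs _))) by lra.
      generalize (Dx_bnd i). intro HDi.
      apply Rle_trans with (INR i / 2 * / (INR i / INR q * (INR i / INR q))).
      + apply Rmult_le_compat; try lra; [apply Rabs_pos| left; apply Rinv_0_lt_compat; nra|].
        apply Rinv_le_contravar; [nra|]. apply Rmult_le_compat; lra.
      + replace (INR i / 2 * / (INR i / INR q * (INR i / INR q))) with (INR q ^ 2 / 2 / INR i) by (field; lra).
        unfold Rdiv. rewrite Rmult_assoc. apply Rmult_le_compat_l; [apply pow_le; lra|].
        rewrite <- (Rmult_1_r (/ 2)) at 2. apply Rmult_le_compat_l; [lra|].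
        rewrite <- Rinv_1. apply Rinv_le_contravar; lra.
    - assert (INR (M - 1) <= INR q / 2) by (rewrite minus_INR by lia; simpl; lra).
      replace (INR q ^ 3 / 4) with (INR q / 2 * (INR q ^ 2 / 2)) by field.
      apply Rmult_le_compat_r; [apply Rmult_le_pos; [apply pow_le; lra| lra]| lra]. }
  assert (Hsin : Rabs (sin (PI / INR q) - PI / INR q) <= 11 / INR q ^ 3).
  { eapply Rle_trans; [apply sin_minus_x|].
    - rewrite Rabs_pos_eq by (apply Rle_mult_inv_pos; lra).
      apply Rmult_le_reg_r with (INR q); [lra|]. unfold Rdiv. rewrite Rmult_assoc, Rinv_l by lra. nra.
    - rewrite Rabs_pos_eq by (apply Rle_mult_inv_pos; lra).
      replace ((PI / INR q) ^ 3 / 6) with (PI ^ 3 / 6 / INR q ^ 3) by (field; lra).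
      unfold Rdiv. apply Rmult_le_compat_r; [left; apply Rinv_0_lt_compat, pow_lt; lra|].
      assert (PI ^ 3 <= 64) by (replace 64 with (4 ^ 3) by ring; apply pow_incr; lra). lra. }
  replace (- (2 * (PI * L * (Dx M * cot (xs M) + sin (PI / INR q) * S))) - -2 * PI ^ 2 * c / INR q ^ 2 * S)
    with (- (2 * PI * L) * (Dx M * cot (xs M)) - (2 * PI * L) * ((sin (PI / INR q) - PI / INR q) * S)) by (rewrite <- HLQ; field; lra).
  assert (HPL : 0 < 2 * PI * L <= 8 / INR q).
  { split; [nra|]. apply Rmult_le_reg_r with (INR q); [lra|].
    replace (8 / INR q * INR q) with 8 by (field; lra).
    replace (2 * PI * L * INR q) with (2 * PI * (L * INR q)) by ring. nra. }
  eapply Rle_trans; [apply Rabs_triang|]. rewrite Rabs_Ropp, !Rabs_mult, Rabs_Ropp, (Rabs_pos_eq (2 * PI * L)) by lra.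
  rewrite (Rabs_pos_eq 2), (Rabs_pos_eq PI), (Rabs_pos_eq L) by lra.
  assert (0 <= Rabs (Dx M)) by apply Rabs_pos.
  assert (0 <= Rabs (cot (xs M))) by apply Rabs_pos.
  assert (0 <= Rabs S) by apply Rabs_pos.
  assert (0 <= Rabs (sin (PI / INR q) - PI / INR q)) by apply Rabs_pos.
  assert (Rabs (Dx M) * Rabs (cot (xs M)) <= INR q / 4 * (12 / INR q)) by (apply Rmult_le_compat; lra).
  assert (Rabs (sin (PI / INR q) - PI / INR q) * Rabs S <= 11 / INR q ^ 3 * (INR q ^ 3 / 4)) by (apply Rmult_le_compat; lra).
  replace (INR q / 4 * (12 / INR q)) with 3 in * by (field; lra).
  replace (11 / INR q ^ 3 * (INR q ^ 3 / 4)) with (11/4) in * by (field; lra).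
  assert (2 * PI * L * (Rabs (Dx M) * Rabs (cot (xs M))) <= 8 / INR q * 3) by (apply Rmult_le_compat; nra).
  assert (2 * PI * L * (Rabs (sin (PI / INR q) - PI / INR q) * Rabs S) <= 8 / INR q * (11/4)) by (apply Rmult_le_compat; nra).
  replace (50 / INR q) with (8 / INR q * 3 + 8 / INR q * (11/4) + 4 / INR q) by (field; lra).
  assert (0 < 4 / INR q) by (apply Rdiv_lt_0_compat; lra). lra.
Qed.

Lemma d_bnd t : Rabs (PI * L * xi' q r t) <= 2 / INR q.
Proof.
  generalize Q_ge PI_bounds L_bnd (xi_abs t). intros HQ HP [HL [HLQ HL2]] Hx.
  rewrite Rabs_mult, (Rabs_pos_eq (PI * L)) by nra.
  apply Rle_trans with (PI * L * (1/2)); [apply Rmult_le_compat_l; nra|].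
  apply Rmult_le_reg_r with (INR q); [lra|]. replace (2 / INR q * INR q) with 2 by (field; lra).
  replace (PI * L * (1 / 2) * INR q) with (PI * (L * INR q) / 2) by field. generalize c_bnd. nra.
Qed.

Lemma w_bnd t : (1 <= t)%nat -> Rabs (c * xi' q r t / INR t) <= / (2 * INR t).
Proof.
  intro Ht. generalize c_bnd (xi_abs t). intros Hc Hx. assert (1 <= INR t) by (apply (le_INR 1); lia).
  unfold Rdiv. rewrite !Rabs_mult, Rabs_inv, (Rabs_pos_eq c), (Rabs_pos_eq (INR t)) by lra.
  rewrite Rinv_mult. replace (/ 2) with (1/2) by field.
  assert (0 < / INR t) by (apply Rinv_0_lt_compat; lra).
  apply Rmult_le_compat_r; [lra|]. assert (0 <= Rabs (xi' q r t)) by apply Rabs_pos. nra.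
Qed.

Lemma EE_pt t : (1 <= t)%nat -> (2 * t <= q)%nat ->
  EE t = ln (sin (xs t - PI * L * xi' q r t) / sin (xs t)) + PI * L * xi' q r t * cot (xs t).
Proof. intros. unfold EE, uu. rewrite rho_eq by lia. reflexivity. Qed.

Lemma EE_small t : (1 <= t)%nat -> (2 * t <= q)%nat -> Rabs (EE t) <= 6 / INR t ^ 2.
Proof.
  intros Ht Htq. generalize Q_ge. intro HQ. assert (1 <= INR t) by (apply (le_INR 1); lia).
  assert (2 * INR t <= INR q) by (replace (2 * INR t) with (INR (2 * t)) by (rewrite mult_INR; reflexivity); apply le_INR; lia).
  rewrite EE_pt by auto.
  assert (Hx : 0 < xs t <= PI / 2) by (split; [apply xs_range; lia| apply xs_half; lia]).
  assert (Hw : Rabs (PI * L * xi' q r t / xs t) <= / (2 * INR t)) by (rewrite w_eq by lia; apply w_bnd; lia).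
  assert (Hw2 : / (2 * INR t) <= 1/2).
  { replace (1/2) with (/ 2) by field. apply Rinv_le_contravar; lra. }
  destruct (pt_lemma (xs t) (PI * L * xi' q r t) (INR q) Hx HQ (d_bnd t) ltac:(lra)) as [P1 _].
  eapply Rle_trans; [apply P1|].
  set (d := PI * L * xi' q r t) in *.
  assert (Hd2 : d ^ 2 <= / INR t ^ 2).
  { rewrite <- pow2_abs. apply Rle_trans with ((2 / INR q) ^ 2); [apply pow_incr; split; [apply Rabs_pos| apply d_bnd]|].
    rewrite <- pow_inv. apply pow_incr. split; [apply Rle_mult_inv_pos; lra|].
    apply Rmult_le_reg_r with (INR q * INR t); [nra|].
    replace (2 / INR q * (INR q * INR t)) with (2 * INR t) by (field; lra).
    replace (/ INR t * (INR q * INR t)) with (INR q) by (field; lra). lra. }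
  assert (Hs : Rabs (d / xs t) + d ^ 2 / 2 <= / INR t).
  { assert (/ INR t ^ 2 <= / INR t).
    { rewrite <- pow_inv. assert (0 < / INR t <= 1) by (split; [apply Rinv_0_lt_compat; lra| rewrite <- Rinv_1; apply Rinv_le_contravar; lra]).
      simpl. nra. }
    replace (/ (2 * INR t)) with (/ INR t / 2) in Hw by (field; lra). lra. }
  assert (0 <= Rabs (d / xs t) + d ^ 2 / 2) by (generalize (Rabs_pos (d / xs t)) (pow2_ge_0 d); lra).
  assert (Hsq : (Rabs (d / xs t) + d ^ 2 / 2) ^ 2 <= (/ INR t) ^ 2) by (apply pow_incr; lra).
  rewrite pow_inv in Hsq. replace (6 / INR t ^ 2) with (6 * / INR t ^ 2) by reflexivity.
  assert (0 < / INR t ^ 2) by (apply Rinv_0_lt_compat, pow_lt; lra). lra.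
Qed.

Lemma EE_all t : (1 <= t <= q - 1)%nat -> Rabs (EE t) <= 6 * / INR t ^ 2 + 6 * / (INR q - INR t) ^ 2.
Proof.
  intro Ht. generalize (INR_le_q1 t Ht). intro Hr.
  assert (0 < / INR t ^ 2) by (apply Rinv_0_lt_compat, pow_lt; lra).
  assert (0 < / (INR q - INR t) ^ 2) by (apply Rinv_0_lt_compat, pow_lt; lra).
  destruct (Compare_dec.le_lt_dec (2 * t) q).
  - generalize (EE_small t ltac:(lia) l). unfold Rdiv. lra.
  - replace t with (q - (q - t))%nat at 1 by lia. rewrite EE_sym by lia.
    generalize (EE_small (q - t) ltac:(lia) ltac:(lia)). rewrite INR_sub by lia. unfold Rdiv. lra.
Qed.

Lemma EE_near t tau : (1 <= t <= tau)%nat -> (2 * tau + 1 <= q)%nat ->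
  Rabs (EE t - (ln (1 - c * xi' q r t / INR t) + c * xi' q r t / INR t)) <= 120 * INR tau / INR q ^ 2.
Proof.
  intros Ht Htq. generalize Q_ge PI_bounds. intros HQ HP.
  assert (1 <= INR t) by (apply (le_INR 1); lia).
  assert (INR t <= INR tau) by (apply le_INR; lia).
  assert (2 * INR tau + 1 <= INR q) by (replace (2 * INR tau + 1) with (INR (2 * tau + 1)) by (rewrite plus_INR, mult_INR; simpl; ring); apply le_INR; lia).
  rewrite EE_pt by lia. rewrite <- (w_eq t) by lia.
  assert (Hx : 0 < xs t <= PI / 2) by (split; [apply xs_range; lia| apply xs_half; lia]).
  assert (Hw : Rabs (PI * L * xi' q r t / xs t) <= / (2 * INR t)) by (rewrite w_eq by lia; apply w_bnd; lia).
  assert (Hw2 : / (2 * INR t) <= 1/2).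
  { replace (1/2) with (/ 2) by field. apply Rinv_le_contravar; lra. }
  destruct (pt_lemma (xs t) (PI * L * xi' q r t) (INR q) Hx HQ (d_bnd t) ltac:(lra)) as [_ P2].
  set (d := PI * L * xi' q r t) in *.
  assert (Hd : Rabs d <= 2 / INR q) by apply d_bnd.
  assert (Hd2 : d ^ 2 <= 4 / INR q ^ 2).
  { rewrite <- pow2_abs. replace (4 / INR q ^ 2) with ((2 / INR q) ^ 2) by (field; lra). apply pow_incr. split; [apply Rabs_pos| auto]. }
  assert (Hxt : xs t <= 4 * INR t / INR q).
  { unfold xs. unfold Rdiv. apply Rmult_le_compat_r; [left; apply Rinv_0_lt_compat; lra| nra]. }
  assert (Hdx : 2 * Rabs d * xs t <= 16 * INR tau / INR q ^ 2).
  { apply Rle_trans with (2 * (2 / INR q) * (4 * INR t / INR q)).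
    - apply Rmult_le_compat; try lra. generalize (Rabs_pos d); lra.
    - replace (2 * (2 / INR q) * (4 * INR t / INR q)) with (16 * INR t / INR q ^ 2) by (field; lra).
      unfold Rdiv. apply Rmult_le_compat_r; [left; apply Rinv_0_lt_compat, pow_lt; lra| lra]. }
  assert (Hsum : d ^ 2 + 2 * Rabs d * xs t <= 20 * INR tau / INR q ^ 2).
  { assert (4 / INR q ^ 2 <= 4 * INR tau / INR q ^ 2) by (unfold Rdiv; apply Rmult_le_compat_r; [left; apply Rinv_0_lt_compat, pow_lt; lra| nra]).
    replace (20 * INR tau / INR q ^ 2) with (4 * INR tau / INR q ^ 2 + 16 * INR tau / INR q ^ 2) by (field; lra). lra. }
  assert (H20 : 20 * INR tau / INR q ^ 2 <= 1/5).
  { apply Rmult_le_reg_r with (INR q ^ 2); [apply pow_lt; lra|].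
    replace (20 * INR tau / INR q ^ 2 * INR q ^ 2) with (20 * INR tau) by (field; lra). nra. }
  eapply Rle_trans; [apply P2; lra|]. lra.
Qed.

Lemma sq_le_pow2 n : (n * n <= 2 ^ (n + 1))%nat.
Proof.
  induction n; [simpl; lia|].
  destruct (Compare_dec.le_lt_dec n 2) as [Hn|Hn].
  - destruct n as [|[|[|]]]; simpl; lia.
  - replace (S n + 1)%nat with (S (n + 1)) by lia. rewrite Nat.pow_succ_r'. nia.
Qed.

Lemma half_pow_bnd n : (1 <= n)%nat -> INR n * (4 * (1/2) ^ (n + 1)) <= 4 / INR n.
Proof.
  intro Hn. assert (1 <= INR n) by (apply (le_INR 1); lia).
  assert (H2 : INR n * INR n <= 2 ^ (n + 1)).
  { rewrite <- mult_INR. replace 2 with (INR 2) by reflexivity. rewrite <- pow_INR. apply le_INR, sq_le_pow2. }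
  replace ((1/2) ^ (n + 1)) with (/ 2 ^ (n + 1)) by (rewrite <- pow_inv; f_equal; field).
  assert (0 < 2 ^ (n + 1)) by (apply pow_lt; lra).
  apply Rmult_le_reg_r with (INR n * 2 ^ (n + 1)); [nra|].
  replace (INR n * (4 * / 2 ^ (n + 1)) * (INR n * 2 ^ (n + 1))) with (4 * (INR n * INR n)) by (field; lra).
  replace (4 / INR n * (INR n * 2 ^ (n + 1))) with (4 * 2 ^ (n + 1)) by (field; lra). lra.
Qed.

Lemma coreB tau Kt : (1 <= tau)%nat -> (2 * tau + 1 <= q)%nat -> INR tau ^ 3 <= Kt * INR q ^ 2 ->
  let M := ((q - 1) / 2)%nat in
  Rabs (ln (Rabs (PL 1 (q - 1) rho)) -
    (-2 * PI ^ 2 * c / INR q ^ 2 * SL 1 (M - 1) (fun t => Dx t / (sin (xs t) * sin (xs (S t))))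
     - 2 * SL 1 tau (fun t => SL 2 (tau - 1) (fun j => / INR j * (c * xi' q r t / INR t) ^ j))))
  <= (80 + 240 * Kt) / INR tau.
Proof.
  intros Ht Htq HK M. generalize Q_ge PI_bounds. intros HQ HP.
  assert (Htr : 1 <= INR tau) by (apply (le_INR 1); lia).
  assert (2 * INR tau + 1 <= INR q) by (replace (2 * INR tau + 1) with (INR (2 * tau + 1)) by (rewrite plus_INR, mult_INR; simpl; ring); apply le_INR; lia).
  assert (Hpos : forall i, (1 <= i < 1 + (q - 1))%nat -> 0 < rho i) by (intros; apply rho_pos; lia).
  rewrite (Rabs_pos_eq (PL 1 (q - 1) rho)) by (left; apply PL_pos; auto).
  rewrite ln_PL by auto.
  rewrite (SL_ext _ _ _ (fun i => EE i - uu i)) by (intros; unfold EE; ring).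
  rewrite SL_minus.
  rewrite (SL_sym q tau EE ltac:(lia) EE_sym).
  set (T1 := -2 * PI ^ 2 * c / INR q ^ 2 * SL 1 (M - 1) (fun t => Dx t / (sin (xs t) * sin (xs (S t))))).
  set (w := fun t => c * xi' q r t / INR t).
  set (mid := SL (tau + 1) (q - 1 - 2 * tau) EE).
  set (T2s := SL 1 tau (fun t => SL 2 (tau - 1) (fun j => / INR j * (w t) ^ j))).
  change (SL 1 tau (fun t => SL 2 (tau - 1) (fun j => / INR j * (c * xi' q r t / INR t) ^ j))) with T2s.
  replace (2 * SL 1 tau EE + mid - SL 1 (q - 1) uu - (T1 - 2 * T2s))
    with ((- SL 1 (q - 1) uu - T1) + 2 * SL 1 tau (fun t => (EE t - (ln (1 - w t) + w t)) + Fln tau (w t)) + mid).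
  2:{ unfold T2s. rewrite SL_plus.
      assert (SL 1 tau (fun t => Fln tau (w t)) = SL 1 tau (fun t => ln (1 - w t) + w t) + SL 1 tau (fun t => SL 2 (tau - 1) (fun j => / INR j * w t ^ j))).
      { rewrite <- SL_plus. apply SL_ext. intros i Hi. unfold Fln. replace tau with (S (tau - 1)) at 1 by lia.
        rewrite SL_cons. simpl (INR 1). rewrite Rinv_1, pow_1. ring. }
      rewrite H1, (SL_minus 1 tau EE (fun t => ln (1 - w t) + w t)). ring. }
  assert (E1 : Rabs (- SL 1 (q - 1) uu - T1) <= 50 / INR tau).
  { eapply Rle_trans; [apply B1_bound|]. unfold Rdiv. apply Rmult_le_compat_l; [lra|]. apply Rinv_le_contravar; lra. }
  assert (E2 : Rabs (SL 1 tau (fun t => (EE t - (ln (1 - w t) + w t)) + Fln tau (w t))) <= 120 * Kt / INR tau + 4 / INR tau).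
  { rewrite SL_plus. eapply Rle_trans; [apply Rabs_triang|].
    assert (A1 : Rabs (SL 1 tau (fun t => EE t - (ln (1 - w t) + w t))) <= INR tau * (120 * INR tau / INR q ^ 2)).
    { apply SL_bound. intros i Hi. apply EE_near; lia. }
    assert (A2 : Rabs (SL 1 tau (fun t => Fln tau (w t))) <= INR tau * (4 * (1/2) ^ (tau + 1))).
    { apply SL_bound. intros i Hi. eapply Rle_trans; [apply Fln_bound|].
      - eapply Rle_trans; [apply w_bnd; lia|]. assert (1 <= INR i) by (apply (le_INR 1); lia).
        apply Rle_trans with (/ 2); [apply Rinv_le_contravar; lra| lra].
      - apply Rmult_le_compat_l; [lra|]. apply pow_incr. split; [apply Rabs_pos|].
        eapply Rle_trans; [apply w_bnd; lia|]. assert (1 <= INR i) by (apply (le_INR 1); lia).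
        apply Rle_trans with (/ 2); [apply Rinv_le_contravar; lra| lra]. }
    generalize (half_pow_bnd tau Ht). intro A3.
    assert (INR tau * (120 * INR tau / INR q ^ 2) <= 120 * Kt / INR tau).
    { apply Rmult_le_reg_r with (INR tau * INR q ^ 2); [apply Rmult_lt_0_compat; [lra| apply pow_lt; lra]|].
      replace (INR tau * (120 * INR tau / INR q ^ 2) * (INR tau * INR q ^ 2)) with (120 * INR tau ^ 3) by (field; lra).
      replace (120 * Kt / INR tau * (INR tau * INR q ^ 2)) with (120 * (Kt * INR q ^ 2)) by (field; lra). lra. }
    lra. }
  assert (E3 : Rabs mid <= 12 / INR tau).
  { unfold mid. eapply Rle_trans; [apply SL_abs|].
    eapply Rle_trans; [apply SL_le with (g := fun t => 6 * / INR t ^ 2 + 6 * / (INR q - INR t) ^ 2); intros i Hi; apply EE_all; lia|].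
    rewrite SL_plus, !SL_scal.
    generalize (SL_inv_sq (tau + 1) (q - 1 - 2 * tau) ltac:(lia)) (SL_inv_sq_rev (tau + 1) (q - 1 - 2 * tau) q ltac:(lia) ltac:(lia)).
    replace (tau + 1 - 1)%nat with tau by lia. replace (q - (tau + 1) - (q - 1 - 2 * tau))%nat with tau by lia.
    intros. unfold Rdiv. lra. }
  eapply Rle_trans; [apply Rabs_triang|].
  assert (Rabs (- SL 1 (q - 1) uu - T1 + 2 * SL 1 tau (fun t => EE t - (ln (1 - w t) + w t) + Fln tau (w t))) <=
          Rabs (- SL 1 (q - 1) uu - T1) + 2 * Rabs (SL 1 tau (fun t => EE t - (ln (1 - w t) + w t) + Fln tau (w t)))).
  { eapply Rle_trans; [apply Rabs_triang|]. rewrite Rabs_mult, (Rabs_pos_eq 2) by lra. lra. }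
  replace ((80 + 240 * Kt) / INR tau) with (50 / INR tau + 2 * (120 * Kt / INR tau + 4 / INR tau) + 12 / INR tau + 10 / INR tau) by (field; lra).
  assert (0 < 10 / INR tau) by (apply Rdiv_lt_0_compat; lra). lra.
Qed.

End Core.

Lemma exists_nat_gt X : exists N : nat, X < INR N.
Proof.
  destruct (archimed (Rabs X)) as [H1 _].
  exists (Z.to_nat (up (Rabs X))).
  assert (0 <= Rabs X) by apply Rabs_pos.
  assert (0 < IZR (up (Rabs X))) by lra. apply lt_IZR in H0.
  rewrite INR_IZR_INZ, Z2Nat.id by lia. generalize (Rle_abs X). lra.
Qed.

Lemma conv_S al u0 u1 n :
  fst (conv_pair al u0 u1 (S n)) = snd (conv_pair al u0 u1 n) /\
  snd (conv_pair al u0 u1 (S n)) = (cf_a al (S n) * snd (conv_pair al u0 u1 n) + fst (conv_pair al u0 u1 n))%nat.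
Proof. simpl. destruct (conv_pair al u0 u1 n). simpl. auto. Qed.

Lemma conv_SS al u0 u1 n :
  fst (conv_pair al u0 u1 (S (S n))) = (cf_a al (S n) * fst (conv_pair al u0 u1 (S n)) + fst (conv_pair al u0 u1 n))%nat.
Proof.
  destruct (conv_S al u0 u1 (S n)) as [-> _]. destruct (conv_S al u0 u1 n) as [-> ->]. reflexivity.
Qed.

Lemma q_SS al n : cf_q al (S (S n)) = (cf_a al (S n) * cf_q al (S n) + cf_q al n)%nat.
Proof. apply conv_SS. Qed.
Lemma p_SS al n : cf_p al (S (S n)) = (cf_a al (S n) * cf_p al (S n) + cf_p al n)%nat.
Proof. apply conv_SS. Qed.
Lemma q_0 al : cf_q al 0 = 0%nat. Proof. reflexivity. Qed.
Lemma q_1 al : cf_q al 1 = 1%nat. Proof. reflexivity. Qed.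
Lemma p_0 al : cf_p al 0 = 1%nat. Proof. reflexivity. Qed.
Lemma p_1 al : cf_p al 1 = 0%nat. Proof. reflexivity. Qed.

Lemma gauss_S al n : gauss_x al (S n) = frac (/ gauss_x al n).
Proof. reflexivity. Qed.

Definition irr (al : R) := forall (p : Z) (q : positive), al <> IZR p / IZR (Zpos q).

Lemma irr_nat al P Q : irr al -> (1 <= Q)%nat -> al * INR Q <> INR P.
Proof.
  intros Hi HQ E. apply (Hi (Z.of_nat P) (Pos.of_nat Q)).
  rewrite <- positive_nat_Z, Nat2Pos.id by lia. rewrite <- !INR_IZR_INZ.
  assert (0 < INR Q) by (apply lt_0_INR; lia). rewrite <- E. field. lra.
Qed.

Lemma cf_main al : 0 < al < 1 -> irr al -> forall n,
  0 < gauss_x al n < 1 /\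
  al * (INR (cf_q al (S n)) + INR (cf_q al n) * gauss_x al n) = INR (cf_p al (S n)) + INR (cf_p al n) * gauss_x al n /\
  (1 <= cf_q al (S n))%nat /\ (cf_q al n <= cf_q al (S n))%nat /\ (n <= cf_q al (S n))%nat /\
  (n = 0 \/ 1 <= cf_q al n)%nat.
Proof.
  intros Hal Hirr. induction n as [|n IH].
  - simpl gauss_x. rewrite q_0, q_1, p_0, p_1. simpl. repeat split; try lra; try lia.
  - destruct IH as [[Hg0 Hg1] [Hid [Hq1 [Hq2 [Hq3 Hq4]]]]].
    set (g := gauss_x al n) in *.
    set (z := Int_part (/ g)).
    assert (Hig : 1 < / g) by (rewrite <- Rinv_1; apply Rinv_lt_contravar; lra).
    destruct (base_Int_part (/ g)) as [Hz1 Hz2]. fold z in Hz1, Hz2.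
    assert (Hz : (1 <= z)%Z) by (assert (0 < IZR z) by lra; apply lt_IZR in H; lia).
    assert (Ha : INR (cf_a al (S n)) = IZR z).
    { unfold cf_a. simpl pred. fold g. fold z. rewrite INR_IZR_INZ, Z2Nat.id by lia. reflexivity. }
    assert (Ha1 : (1 <= cf_a al (S n))%nat).
    { apply INR_le. rewrite Ha. simpl. apply IZR_le in Hz. exact Hz. }
    assert (Hg' : gauss_x al (S n) = / g - IZR z).
    { rewrite gauss_S. fold g. unfold frac, frac_part. fold z. reflexivity. }
    destruct (base_fp (/ g)) as [Hf1 Hf2]. unfold frac_part in Hf1, Hf2. fold z in Hf1, Hf2.
    assert (Hrel : g * (IZR z + gauss_x al (S n)) = 1) by (rewrite Hg'; field; lra).
    rewrite q_SS, p_SS, !plus_INR, !mult_INR, Ha.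
    assert (Hid2 : al * (IZR z * INR (cf_q al (S n)) + INR (cf_q al n) + INR (cf_q al (S n)) * gauss_x al (S n)) =
                   IZR z * INR (cf_p al (S n)) + INR (cf_p al n) + INR (cf_p al (S n)) * gauss_x al (S n)).
    { apply Rmult_eq_reg_l with g; [|lra].
      replace (g * (al * (IZR z * INR (cf_q al (S n)) + INR (cf_q al n) + INR (cf_q al (S n)) * gauss_x al (S n))))
        with (al * (INR (cf_q al (S n)) * (g * (IZR z + gauss_x al (S n))) + INR (cf_q al n) * g)) by ring.
      replace (g * (IZR z * INR (cf_p al (S n)) + INR (cf_p al n) + INR (cf_p al (S n)) * gauss_x al (S n)))
        with (INR (cf_p al (S n)) * (g * (IZR z + gauss_x al (S n))) + INR (cf_p al n) * g) by ring.
      rewrite Hrel. lra. }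
    assert (Hq' : (1 <= cf_q al (S (S n)))%nat) by (rewrite q_SS; nia).
    split; [split|].
    + destruct (Rle_lt_or_eq_dec 0 (gauss_x al (S n))) as [Hp|He]; [rewrite Hg'; lra| exact Hp|].
      exfalso. rewrite <- He in Hid2.
      apply (irr_nat al (cf_p al (S (S n))) (cf_q al (S (S n))) Hirr Hq').
      rewrite q_SS, p_SS, !plus_INR, !mult_INR, Ha. lra.
    + rewrite Hg'. lra.
    + split; [exact Hid2|]. repeat split.
      * nia.
      * nia.
      * destruct Hq4 as [->|Hq4]; [simpl in *; nia| nia].
      * right. exact Hq1.
Qed.

Lemma cf_det al n : (INR (cf_q al (S n)) * INR (cf_p al n) - INR (cf_p al (S n)) * INR (cf_q al n)) ^ 2 = 1.
Proof.
  induction n.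
  - rewrite q_0, q_1, p_0, p_1. simpl. ring.
  - rewrite q_SS, p_SS, !plus_INR, !mult_INR. rewrite <- IHn. ring.
Qed.

Lemma Lambda_abs al m : 0 < al < 1 -> irr al ->
  Rabs (Lambda al (S m)) = c_n al (S m) / INR (cf_q al (S m)) /\
  0 < c_n al (S m) < 1.
Proof.
  intros Hal Hi. destruct (cf_main al Hal Hi m) as [[Hg0 Hg1] [Hid [Hq1 [Hq2 _]]]].
  set (g := gauss_x al m) in *.
  set (Q1 := INR (cf_q al (S m))) in *. set (Q0 := INR (cf_q al m)) in *.
  set (P1 := INR (cf_p al (S m))) in *. set (P0 := INR (cf_p al m)) in *.
  assert (HQ1 : 1 <= Q1) by (apply (le_INR 1); lia).
  assert (HQ0 : 0 <= Q0) by apply pos_INR.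
  assert (HQ01 : Q0 <= Q1) by (apply le_INR; lia).
  generalize (cf_det al m). fold Q1 Q0 P1 P0. intro Hd.
  set (d := Q1 * P0 - P1 * Q0) in *.
  assert (HL : Lambda al (S m) * (Q0 + Q1 / g) = d).
  { unfold Lambda. fold Q1 P1. unfold d.
    apply Rmult_eq_reg_l with g; [|lra].
    replace (g * ((Q1 * al - P1) * (Q0 + Q1 / g))) with ((Q1 * al - P1) * (g * Q0 + Q1)) by (field; lra).
    assert (Q1 * al - P1 = P0 * g - al * Q0 * g) by lra.
    rewrite H. nra. }
  assert (Hpos : 0 < Q0 + Q1 / g) by (assert (0 < Q1 / g) by (apply Rdiv_lt_0_compat; lra); lra).
  assert (Had : Rabs d = 1).
  { assert (Rabs d ^ 2 = 1) by (rewrite pow2_abs; auto).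
    assert (0 <= Rabs d) by apply Rabs_pos. nra. }
  unfold c_n, alpha_plus, alpha_minus. simpl pred. fold g Q1 Q0.
  assert (0 < / g) by (apply Rinv_0_lt_compat; lra).
  assert (1 < / g) by (rewrite <- Rinv_1; apply Rinv_lt_contravar; lra).
  assert (0 <= Q0 / Q1) by (apply Rle_mult_inv_pos; lra).
  split.
  - apply Rmult_eq_reg_r with (Q0 + Q1 / g); [|lra].
    rewrite <- Rabs_pos_eq with (x := Q0 + Q1 / g) at 1 by lra.
    rewrite <- Rabs_mult, HL, Had. field. assert (0 <= Q0 * g) by nra. repeat split; lra.
  - split.
    + apply Rinv_0_lt_compat. lra.
    + rewrite <- Rinv_1. apply Rinv_lt_contravar; lra.
Qed.

Lemma frac_sym_gen q r t : (1 <= t <= q - 1)%nat -> frac (INR t * INR r / INR q) <> 0 ->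
  frac (INR (q - t) * INR r / INR q) = 1 - frac (INR t * INR r / INR q).
Proof.
  intros Ht Hf. unfold frac in *.
  assert (0 < INR q) by (apply lt_0_INR; lia).
  set (x := INR t * INR r / INR q) in *.
  replace (INR (q - t) * INR r / INR q) with (INR r - x) by (unfold x; rewrite minus_INR by lia; field; lra).
  destruct (base_fp x) as [H1 H2].
  symmetry. apply (Int_part_frac_part_spec (INR r - x) (Z.of_nat r - Int_part x - 1)%Z (1 - frac_part x)).
  - lra.
  - rewrite !minus_IZR, <- INR_IZR_INZ. unfold frac_part. ring.
Qed.

Lemma frac_nonzero al m t : 0 < al < 1 -> irr al -> (1 <= t <= cf_q al (S m) - 1)%nat ->
  frac (INR t * INR (cf_q al m) / INR (cf_q al (S m))) <> 0.
Proof.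
  intros Hal Hi Ht Hf. destruct (cf_main al Hal Hi m) as [_ [_ [Hq1 _]]].
  unfold frac in Hf. destruct (fp_nat _ Hf) as [k Hk].
  generalize (cf_det al m). intro Hd.
  set (Q1 := INR (cf_q al (S m))) in *. set (Q0 := INR (cf_q al m)) in *.
  set (P1 := INR (cf_p al (S m))) in *. set (P0 := INR (cf_p al m)) in *.
  assert (HQ : 0 < Q1) by (apply lt_0_INR; lia).
  assert (Ht1 : 1 <= INR t) by (apply (le_INR 1); lia).
  assert (Ht2 : INR t + 1 <= Q1) by (unfold Q1; rewrite <- S_INR; apply le_INR; lia).
  assert (Htr : INR t * Q0 = IZR k * Q1) by (rewrite <- Hk; field; lra).
  set (z := (Z.of_nat t * Z.of_nat (cf_p al m) - Z.of_nat (cf_p al (S m)) * k)%Z).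
  assert (Hz : IZR z = INR t * P0 - P1 * IZR k) by (unfold z, P0, P1; rewrite minus_IZR, !mult_IZR, <- !INR_IZR_INZ; ring).
  assert (Hsq : INR t ^ 2 = (Q1 * IZR z) ^ 2).
  { rewrite Hz. rewrite <- (Rmult_1_r (INR t ^ 2)), <- Hd.
    replace ((Q1 * (INR t * P0 - P1 * IZR k)) ^ 2) with ((INR t * Q1 * P0 - P1 * (IZR k * Q1)) ^ 2) by ring.
    rewrite <- Htr. ring. }
  assert (Hz2 : 0 < IZR z ^ 2 < 1).
  { split.
    - assert (0 < (Q1 * IZR z) ^ 2) by (rewrite <- Hsq; apply pow_lt; lra).
      destruct (Req_dec (IZR z) 0) as [E|E]; [rewrite E in H; simpl in H; lra|].
      assert (IZR z ^ 2 = Rsqr (IZR z)) by (unfold Rsqr; ring). rewrite H0. apply Rlt_0_sqr. auto.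
    - apply Rmult_lt_reg_l with (Q1 ^ 2); [apply pow_lt; lra|].
      replace (Q1 ^ 2 * IZR z ^ 2) with ((Q1 * IZR z) ^ 2) by ring. rewrite <- Hsq.
      rewrite Rmult_1_r. simpl. nra. }
  replace (IZR z ^ 2) with (IZR (z * z)) in Hz2 by (rewrite mult_IZR; ring).
  destruct Hz2 as [A B]. apply lt_IZR in A. apply lt_IZR in B. lia.
Qed.

Lemma coreA Q Lam c : 1 <= Q -> Rabs Lam = c / Q -> 0 < c < 1 ->
  Rabs (Rabs (2 * Q * sin (PI * Lam)) - 2 * PI * c) <= 3 * (2 * PI * c) * Lam ^ 2.
Proof.
  intros HQ HL Hc. generalize PI_bounds; intro HP.
  remember (Rabs Lam) as L eqn:EL.
  assert (HL0 : 0 < L) by (rewrite HL; apply Rdiv_lt_0_compat; lra).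
  assert (HL1 : L <= 1).
  { rewrite HL. apply Rmult_le_reg_r with Q; [lra|]. replace (c / Q * Q) with c by (field; lra). lra. }
  assert (Hs : Rabs (sin (PI * Lam)) = sin (PI * L)).
  { destruct (Rle_lt_dec 0 Lam).
    - rewrite (Rabs_pos_eq Lam) in EL by lra. subst L. apply Rabs_pos_eq. apply sin_ge_0; nra.
    - rewrite (Rabs_left Lam) in EL by lra. replace (PI * Lam) with (- (PI * - Lam)) by ring. rewrite sin_neg, Rabs_Ropp.
      subst L. apply Rabs_pos_eq. apply sin_ge_0; nra. }
  rewrite Rabs_mult, Hs, (Rabs_pos_eq (2 * Q)) by lra.
  assert (Hc2 : c = L * Q) by (rewrite HL; field; lra).
  generalize (sin_minus_x_pos (PI * L) ltac:(split; nra)). intros [H1 H2].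
  replace (2 * Q * sin (PI * L) - 2 * PI * c) with (- (2 * Q * (PI * L - sin (PI * L)))) by (rewrite Hc2; ring).
  rewrite Rabs_Ropp, Rabs_pos_eq by nra.
  replace (Lam ^ 2) with (L ^ 2) by (rewrite EL; apply pow2_abs).
  rewrite Hc2.
  apply Rle_trans with (2 * Q * ((PI * L) ^ 3 / 6)); [apply Rmult_le_compat_l; lra|].
  replace (3 * (2 * PI * (L * Q)) * L ^ 2) with (2 * Q * (PI * L ^ 3 * 3)) by ring.
  apply Rmult_le_compat_l; [lra|].
  replace ((PI * L) ^ 3 / 6) with (PI * L ^ 3 * (PI ^ 2 / 6)) by field.
  apply Rmult_le_compat_l; [apply Rmult_le_pos; [lra| apply pow_le; lra]|]. nra.
Qed.

Lemma ev_incr u N : (forall n, (N <= n)%nat -> (u n < u (S n))%nat) -> forall k, (k <= u (N + k))%nat.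
Proof.
  intros H k. induction k; [lia|]. replace (N + S k)%nat with (S (N + k)) by lia.
  specialize (H (N + k)%nat ltac:(lia)). lia.
Qed.

Lemma tau_facts (u : nat -> nat) (K X Q : R) (t : nat) :
  INR t <= K * sqrt Q -> 0 <= Q -> 4 * K ^ 2 + 2 <= Q -> (1 <= t)%nat -> (1 <= Q) ->
  forall q : nat, INR q = Q ->
  (2 * t + 1 <= q)%nat /\ INR t ^ 3 <= K ^ 2 * Q ^ 2.
Proof.
  intros H HQ HQK Ht HQ1 q Hq.
  assert (Ht0 : 0 <= INR t) by apply pos_INR.
  assert (Hsq : INR t ^ 2 <= K ^ 2 * Q).
  { assert (INR t ^ 2 <= (K * sqrt Q) ^ 2) by (apply pow_incr; lra).
    replace ((K * sqrt Q) ^ 2) with (K ^ 2 * (sqrt Q * sqrt Q)) in H0 by ring.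
    rewrite sqrt_sqrt in H0 by lra. exact H0. }
  assert (H2 : (2 * t + 1 <= q)%nat).
  { destruct (Compare_dec.le_lt_dec (2 * t + 1) q) as [l|l]; [exact l|].
    exfalso. apply lt_INR in l. rewrite plus_INR, mult_INR, Hq in l. simpl in l.
    assert (0 <= K ^ 2) by (apply pow2_ge_0).
    assert ((Q - 1) ^ 2 <= 4 * (INR t) ^ 2) by nra. nra. }
  split; [exact H2|].
  assert (INR t <= Q).
  { rewrite <- Hq. apply le_INR. lia. }
  replace (INR t ^ 3) with (INR t * INR t ^ 2) by ring.
  assert (0 <= K ^ 2) by (apply pow2_ge_0).
  apply Rle_trans with (Q * (K ^ 2 * Q)); [apply Rmult_le_compat; try lra; apply pow_le; lra|].
  right. ring.
Qed.

Theorem lemma3p2 (al : R) (tau kappa : nat -> nat) :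
  0 < al < 1 ->
  (forall (p : Z) (q : positive), al <> IZR p / IZR (Zpos q)) ->
  eventually_increasing tau -> eventually_increasing kappa ->
  bigO_sqrt_q al tau -> bigO_sqrt_q al kappa ->
  exists (K : R) (N : nat), forall n : nat, (N <= n)%nat ->
    Rabs (A_n al n - 2 * PI * c_n al n) <= K * (2 * PI * c_n al n) * (Lambda al n) ^ 2 /\
    Rabs (ln (B_n al n) - logB_main al tau n) <= K / INR (tau n) /\
    Rabs (C_n al n - C_main al kappa n) <= K / INR (kappa n).
Proof.
  intros Hal Hirr [Nt Ht] [Nk Hk] [Kt [Nt' Ht']] [Kk [Nk' Hk']].
  fold (irr al) in Hirr.
  destruct (exists_nat_gt (100 + 4 * Kt ^ 2 + 4 * Kk ^ 2 + 2)) as [N0 HN0].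
  exists (131 + 240 * Kt ^ 2), (Nt + 1 + Nt' + (Nk + 1) + Nk' + N0 + 2)%nat.
  intros n Hn. destruct n as [|m]; [lia|].
  destruct (cf_main al Hal Hirr m) as [_ [_ [Hq1 [Hq2 [Hq3 _]]]]].
  destruct (Lambda_abs al m Hal Hirr) as [HLam Hc].
  set (q := cf_q al (S m)) in *. set (r := cf_q al m) in *.
  set (c := c_n al (S m)) in *. set (L := Rabs (Lambda al (S m))) in *.
  assert (HmN0 : INR N0 <= INR m) by (apply le_INR; lia).
  assert (HQm : INR m <= INR q) by (apply le_INR; lia).
  assert (HQ : 100 + 4 * Kt ^ 2 + 4 * Kk ^ 2 + 2 < INR q) by lra.
  assert (HK1 : 0 <= Kt ^ 2) by apply pow2_ge_0.
  assert (HK2 : 0 <= Kk ^ 2) by apply pow2_ge_0.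
  assert (Hq100 : (100 <= q)%nat).
  { destruct (Compare_dec.le_lt_dec 100 q) as [l|l]; [exact l|]. apply lt_INR in l. simpl in l. lra. }
  assert (HH : Hyp q r c L).
  { split; [exact Hq100|]. split; [exact Hc|]. split; [exact HLam|].
    intros t Ht1. apply frac_sym_gen; auto. apply frac_nonzero; auto. }
  set (tn := tau (S m)).
  assert (Ht1 : (1 <= tn)%nat).
  { generalize (ev_incr tau Nt Ht (S m - Nt)). replace (Nt + (S m - Nt))%nat with (S m) by lia. unfold tn. lia. }
  destruct (tau_facts tau Kt 0 (INR q) tn (Ht' (S m) ltac:(lia)) ltac:(lra) ltac:(lra) Ht1 ltac:(lra) q eq_refl) as [Htq Ht3].
  set (kn := kappa (S m)).
  assert (Hk1 : (1 <= kn)%nat).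
  { generalize (ev_incr kappa Nk Hk (S m - Nk)). replace (Nk + (S m - Nk))%nat with (S m) by lia. unfold kn. lia. }
  destruct (tau_facts kappa Kk 0 (INR q) kn (Hk' (S m) ltac:(lia)) ltac:(lra) ltac:(lra) Hk1 ltac:(lra) q eq_refl) as [Hkq _].
  assert (Htr : 1 <= INR tn) by (apply (le_INR 1); lia).
  assert (Hkr : 1 <= INR kn) by (apply (le_INR 1); lia).
  split; [|split].
  -
    unfold A_n. fold q.
    eapply Rle_trans; [apply coreA; [lra| exact HLam| exact Hc]|].
    apply Rmult_le_compat_r; [apply pow2_ge_0|]. apply Rmult_le_compat_r; [generalize PI_bounds; nra|]. lra.
  -
    assert (EB : B_n al (S m) = Rabs (PL 1 (q - 1) (rho q r L))).
    { unfold B_n. rewrite prodR_PL. fold q. replace (S (q - 1) - 1)%nat with (q - 1)%nat by lia. reflexivity. }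
    assert (EM : logB_main al tau (S m) =
      -2 * PI ^ 2 * c / INR q ^ 2 * SL 1 (((q - 1) / 2) - 1) (fun t => Dx q r t / (sin (xs q t) * sin (xs q (S t))))
      - 2 * SL 1 tn (fun t => SL 2 (tn - 1) (fun j => / INR j * (c * xi' q r t / INR t) ^ j))).
    { unfold logB_main, M_n. fold q c tn. rewrite !sumR_SL.
      replace (S ((q - 1) / 2 - 1) - 1)%nat with ((q - 1) / 2 - 1)%nat by lia.
      replace (S tn - 1)%nat with tn by lia.
      rewrite (SL_ext 1 ((q - 1) / 2 - 1) _ (fun t => Dx q r t / (sin (xs q t) * sin (xs q (S t))))).
      2:{ intros t _. unfold Dt, Dx. rewrite sumR_SL. replace (S t - 1)%nat with t by lia. f_equal.
          apply SL_ext. intros s _. unfold xi', alpha_minus. simpl pred. fold q r. f_equal. f_equal. unfold Rdiv. ring. }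
      rewrite (SL_ext 1 tn _ (fun t => SL 2 (tn - 1) (fun j => / INR j * (c * xi' q r t / INR t) ^ j))).
      2:{ intros t _. rewrite sumR_SL. replace (S tn - 2)%nat with (tn - 1)%nat by lia. reflexivity. }
      ring. }
    rewrite EB, EM.
    eapply Rle_trans; [apply (coreB q r c L HH tn (Kt ^ 2) Ht1 Htq); exact Ht3|].
    unfold Rdiv. apply Rmult_le_compat_r; [left; apply Rinv_0_lt_compat; lra| lra].
  -
    assert (EC : C_n al (S m) = PL 1 (q - 1) (fun t => sqrt (1 - ss q r L 0 ^ 2 / ss q r L t ^ 2))).
    { unfold C_n. rewrite prodR_PL. fold q. replace (S (q - 1) - 1)%nat with (q - 1)%nat by lia. reflexivity. }
    assert (ECm : C_main al kappa (S m) = PL 1 kn (fun t => 1 - / (4 * (INR t / c - xi' q r t) ^ 2))).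
    { unfold C_main. rewrite prodR_PL. fold kn. replace (S kn - 1)%nat with kn by lia. reflexivity. }
    rewrite EC, ECm.
    eapply Rle_trans; [apply (coreC q r c L HH kn Hk1 Hkq)|].
    unfold Rdiv. apply Rmult_le_compat_r; [left; apply Rinv_0_lt_compat; lra| lra].
Qed.
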